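(* Let $\Omega\subset\mathbb{R}^2\cong\mathbb{C}$ be a domain and let $\Phi=u+iv$ be an analytic function of $z=x+iy$ in $\Omega$ (with $u,v$ real valued) such that $\Phi_z=\partial_z\Phi$ is bounded and has no zeros in $\Omega$. Let $U$ and $V$ be arbitrary differentiable nonvanishing real valued functions of one real variable, and put $F=U(u)V(v)$, $G=\dfrac{i}{U(u)V(v)}$. For $m=0,\pm1,\pm2,\ldots$ define $$F_m=(\Phi_z)^mF,\quad G_m=(\Phi_z)^mG\qquad\text{for even } m,$$ $$F_m=\frac{(\Phi_z)^m}{U^2(u)}F,\quad G_m=(\Phi_z)^mU^2(u)\,G\qquad\text{for odd } m.$$ Then each $(F_m,G_m)$ is a generating pair in $\Omega$, and for every integer $m$ the pair $(F_{m+1},G_{m+1})$ is a successor of $(F_m,G_m)$. That is, $\{(F_m,G_m)\}_{m\in\mathbb{Z}}$ is a generating sequence in $\Omega$ in which $(F,G)=(F_0,G_0)$ is embedded.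
   Context: Notation: $\partial_{\bar z}=\frac12(\partial_x+i\partial_y)$ and $\partial_z=\frac12(\partial_x-i\partial_y)$; a subscript $\bar z$ or $z$ on a function means application of the corresponding operator. A pair of complex functions $(F,G)$ having partial derivatives in $\Omega$ is a generating pair if $\operatorname{Im}(\overline{F}G)>0$ in $\Omega$. Its characteristic coefficients are $$a_{(F,G)}=-\frac{\overline{F}G_{\bar z}-F_{\bar z}\overline{G}}{F\overline{G}-\overline{F}G},\quad b_{(F,G)}=\frac{FG_{\bar z}-F_{\bar z}G}{F\overline{G}-\overline{F}G},$$ $$A_{(F,G)}=-\frac{\overline{F}G_{z}-F_{z}\overline{G}}{F\overline{G}-\overline{F}G},\quad B_{(F,G)}=\frac{FG_{z}-F_{z}G}{F\overline{G}-\overline{F}G}.$$ A generating pair $(F_1,G_1)$ is called a successor of a generating pair $(F,G)$ if $a_{(F_1,G_1)}=a_{(F,G)}$ and $b_{(F_1,G_1)}=-B_{(F,G)}$. A sequence $\{(F_m,G_m)\}$, $m=0,\pm1,\pm2,\ldots$, of generating pairs is a generating sequence if $(F_{m+1},G_{m+1})$ is a successor of $(F_m,G_m)$ for every $m$. The pair $(F,G)$ is said to be embedded in it if $(F_0,G_0)=(F,G)$. *)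

(* Defs.v *)
From Stdlib Require Import Reals ZArith.
From Coquelicot Require Export Coquelicot.
Open Scope R_scope.
Open Scope C_scope.

Definition connected_set (S : Complex.C -> Prop) : Prop :=
  forall A B : Complex.C -> Prop, open A -> open B ->
    (forall z, S z -> A z \/ B z) ->
    (forall z, S z -> A z -> B z -> False) ->
    (exists z, S z /\ A z) -> (exists z, S z /\ B z) -> False.

Definition is_domain (Om : Complex.C -> Prop) : Prop :=
  open Om /\ connected_set Om /\ exists z, Om z.

Definition analytic_on (Phi : Complex.C -> Complex.C) (Om : Complex.C -> Prop) : Prop :=
  forall z, Om z -> @ex_derive C_AbsRing C_NormedModule Phi z.

Definition dx (f : Complex.C -> Complex.C) (z : Complex.C) : Complex.C :=
  (Derive (fun t => Re (f (t, Im z))) (Re z), Derive (fun t => Im (f (t, Im z))) (Re z)).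
Definition dy (f : Complex.C -> Complex.C) (z : Complex.C) : Complex.C :=
  (Derive (fun t => Re (f (Re z, t))) (Im z), Derive (fun t => Im (f (Re z, t))) (Im z)).

Definition has_partials (f : Complex.C -> Complex.C) (Om : Complex.C -> Prop) : Prop :=
  forall z, Om z ->
    ex_derive (fun t => Re (f (t, Im z))) (Re z) /\
    ex_derive (fun t => Im (f (t, Im z))) (Re z) /\
    ex_derive (fun t => Re (f (Re z, t))) (Im z) /\
    ex_derive (fun t => Im (f (Re z, t))) (Im z).

Definition dzbar (f : Complex.C -> Complex.C) (z : Complex.C) : Complex.C :=
  (dx f z + Ci * dy f z) / 2.
Definition dz (f : Complex.C -> Complex.C) (z : Complex.C) : Complex.C :=
  (dx f z - Ci * dy f z) / 2.

Definition generating_pair (F G : Complex.C -> Complex.C) (Om : Complex.C -> Prop) : Prop :=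
  has_partials F Om /\ has_partials G Om /\
  forall z, Om z -> 0 < Im (Cconj (F z) * G z).

Definition char_a (F G : Complex.C -> Complex.C) (z : Complex.C) : Complex.C :=
  - ((Cconj (F z) * dzbar G z - dzbar F z * Cconj (G z)) /
     (F z * Cconj (G z) - Cconj (F z) * G z)).
Definition char_b (F G : Complex.C -> Complex.C) (z : Complex.C) : Complex.C :=
  (F z * dzbar G z - dzbar F z * G z) / (F z * Cconj (G z) - Cconj (F z) * G z).
Definition char_A (F G : Complex.C -> Complex.C) (z : Complex.C) : Complex.C :=
  - ((Cconj (F z) * dz G z - dz F z * Cconj (G z)) /
     (F z * Cconj (G z) - Cconj (F z) * G z)).
Definition char_B (F G : Complex.C -> Complex.C) (z : Complex.C) : Complex.C :=
  (F z * dz G z - dz F z * G z) / (F z * Cconj (G z) - Cconj (F z) * G z).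

Definition successor (F1 G1 F G : Complex.C -> Complex.C) (Om : Complex.C -> Prop) : Prop :=
  generating_pair F1 G1 Om /\
  forall z, Om z -> char_a F1 G1 z = char_a F G z /\ char_b F1 G1 z = - char_B F G z.

Definition generating_sequence (Fs Gs : Z -> Complex.C -> Complex.C) (Om : Complex.C -> Prop) : Prop :=
  (forall m : Z, generating_pair (Fs m) (Gs m) Om) /\
  (forall m : Z, successor (Fs (m + 1)%Z) (Gs (m + 1)%Z) (Fs m) (Gs m) Om).

Definition Czpow (w : Complex.C) (m : Z) : Complex.C :=
  match m with
  | Z0 => 1
  | Zpos p => @pow_n C_Ring w (Pos.to_nat p)
  | Zneg p => / (@pow_n C_Ring w (Pos.to_nat p))
  end.

(* Main.v *)
Require Import Defs.
From Stdlib Require Import Reals ZArith Lra Lia FunctionalExtensionality.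
From Coquelicot Require Import Coquelicot.

Open Scope R_scope.
Open Scope C_scope.

Definition CD (f : Complex.C -> Complex.C) (z l : Complex.C) : Prop :=
  @is_derive C_AbsRing (AbsRing_NormedModule C_AbsRing) f z l.

Definition CDe (f : Complex.C -> Complex.C) (z l : Complex.C) : Prop :=
  forall eps : R, (0 < eps)%R -> exists del : R, (0 < del)%R /\
    forall y, (Cmod (y - z) < del)%R -> (Cmod (f y - f z - (y - z) * l) <= eps * Cmod (y - z))%R.

Lemma Cmod_im_le (c : Complex.C) : (Rabs (Im c) <= Cmod c)%R.
Proof.
  unfold Cmod. rewrite <- sqrt_Rsqr_abs. apply sqrt_le_1_alt.
  unfold Rsqr, Im; simpl; nra.
Qed.

Lemma Cmod_re_le (c : Complex.C) : (Rabs (Re c) <= Cmod c)%R.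
Proof. apply re_le_Cmod. Qed.

Lemma Cmod_le_sum (c : Complex.C) : (Cmod c <= Rabs (Re c) + Rabs (Im c))%R.
Proof.
  unfold Cmod. rewrite <- (sqrt_Rsqr (Rabs (Re c) + Rabs (Im c))).
  2:{ pose proof (Rabs_pos (Re c)); pose proof (Rabs_pos (Im c)); lra. }
  apply sqrt_le_1_alt. unfold Rsqr.
  pose proof (Rabs_pos (Re c)); pose proof (Rabs_pos (Im c)).
  replace (fst c ^ 2 + snd c ^ 2)%R with (Rabs (Re c) * Rabs (Re c) + Rabs (Im c) * Rabs (Im c))%R.
  - nra.
  - rewrite <- !Rabs_mult. unfold Re, Im. rewrite !Rabs_right; try nra.
Qed.

Lemma CD_CDe f z l : CD f z l -> CDe f z l.
Proof.
  intros [_ H] eps Heps.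
  specialize (H z (fun P HP => HP)).
  destruct (H (mkposreal eps Heps)) as [d Hd].
  exists d. split; [apply cond_pos|].
  intros y Hy. exact (Hd y Hy).
Qed.

Lemma CDe_CD f z l : CDe f z l -> CD f z l.
Proof.
  intros H. split.
  - apply is_linear_scal_l.
  - intros x Hx. apply (@is_filter_lim_locally_unique C_AbsRing (AbsRing_NormedModule C_AbsRing)) in Hx. subst x.
    intros eps. destruct (H eps (cond_pos eps)) as [d [Hd Hd2]].
    exists (mkposreal _ Hd).
    intros y Hy. exact (Hd2 y Hy).
Qed.

Lemma CNM_CDe f z l : @is_derive C_AbsRing C_NormedModule f z l -> CDe f z l.
Proof.
  intros [_ H] eps Heps.
  specialize (H z (fun P HP => HP)).
  destruct (H (mkposreal eps Heps)) as [d Hd].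
  exists d. split; [apply cond_pos|].
  intros y Hy. exact (Hd y Hy).
Qed.

Lemma CD_const c z : CD (fun _ => c) z 0.
Proof. exact (@is_derive_const C_AbsRing (AbsRing_NormedModule C_AbsRing) c z). Qed.
Lemma CD_id z : CD (fun y => y) z 1.
Proof. exact (@is_derive_id C_AbsRing z). Qed.
Lemma CD_plus f g z a b : CD f z a -> CD g z b -> CD (fun y => f y + g y) z (a + b).
Proof. intros H1 H2; exact (@is_derive_plus C_AbsRing (AbsRing_NormedModule C_AbsRing) f g z a b H1 H2). Qed.
Lemma CD_opp f z a : CD f z a -> CD (fun y => - f y) z (- a).
Proof. intros H1; exact (@is_derive_opp C_AbsRing (AbsRing_NormedModule C_AbsRing) f z a H1). Qed.
Lemma CD_minus f g z a b : CD f z a -> CD g z b -> CD (fun y => f y - g y) z (a - b).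
Proof. intros H1 H2; exact (@is_derive_minus C_AbsRing (AbsRing_NormedModule C_AbsRing) f g z a b H1 H2). Qed.
Lemma CD_mult f g z a b : CD f z a -> CD g z b -> CD (fun y => f y * g y) z (a * g z + f z * b).
Proof. intros H1 H2; exact (is_derive_mult f g z a b H1 H2 Cmult_comm). Qed.
Lemma CD_comp f g z a b : CD g z a -> CD f (g z) b -> CD (fun y => f (g y)) z (a * b).
Proof. intros H1 H2; exact (@is_derive_comp C_AbsRing (AbsRing_NormedModule C_AbsRing) f g z b a H2 H1). Qed.
Lemma CD_ext f g z l : (forall y, f y = g y) -> CD f z l -> CD g z l.
Proof. intros; eapply (@is_derive_ext C_AbsRing (AbsRing_NormedModule C_AbsRing)); eauto. Qed.
Lemma CD_ext_loc f g z l d : (0 < d)%R -> (forall y, (Cmod (y - z) < d)%R -> f y = g y) -> CD f z l -> CD g z l.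
Proof. intros Hd H1 H2; eapply (@is_derive_ext_loc C_AbsRing (AbsRing_NormedModule C_AbsRing)); [|exact H2].
  exists (mkposreal d Hd). intros y Hy. apply H1. exact Hy. Qed.
Lemma CD_eq_l f z l l' : l = l' -> CD f z l -> CD f z l'.
Proof. intros ->; auto. Qed.

Lemma Cmod_sub_sym a b : Cmod (a - b) = Cmod (b - a).
Proof. replace (a - b) with (- (b - a)) by ring. apply Cmod_opp. Qed.

Lemma Cmod_rev_tri a b : (Cmod a - Cmod (a - b) <= Cmod b)%R.
Proof. pose proof (Cmod_triangle b (a - b)). replace (b + (a - b)) with a in H by ring. lra. Qed.

Lemma CD_cont f z l : CD f z l -> forall eps, (0 < eps)%R -> exists del, (0 < del)%R /\
  forall y, (Cmod (y - z) < del)%R -> (Cmod (f y - f z) < eps)%R.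
Proof.
  intros H%CD_CDe eps Heps. destruct (H 1%R ltac:(lra)) as [d [Hd H1]].
  pose proof (Cmod_ge_0 l).
  exists (Rmin d (eps / (Cmod l + 1))). split.
  { apply Rmin_pos; auto. apply Rdiv_lt_0_compat; lra. }
  intros y Hy. specialize (H1 y ltac:(eapply Rlt_le_trans; [exact Hy| apply Rmin_l])).
  assert (Hy2 : (Cmod (y - z) < eps / (Cmod l + 1))%R) by (eapply Rlt_le_trans; [exact Hy| apply Rmin_r]).
  replace (f y - f z) with ((f y - f z - (y - z) * l) + (y - z) * l) by ring.
  eapply Rle_lt_trans; [apply Cmod_triangle|]. rewrite Cmod_mult.
  pose proof (Cmod_ge_0 (y - z)).
  apply (Rmult_lt_compat_r (Cmod l + 1)) in Hy2; [|lra].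
  replace (eps / (Cmod l + 1) * (Cmod l + 1))%R with eps in Hy2 by (field; lra).
  nra.
Qed.

Lemma CD_unique f z l1 l2 : CD f z l1 -> CD f z l2 -> l1 = l2.
Proof.
  intros H1%CD_CDe H2%CD_CDe.
  destruct (Ceq_dec l1 l2) as [|Hne]; auto. exfalso.
  assert (Hp : (0 < Cmod (l1 - l2))%R). { apply Cmod_gt_0. intros E. apply Hne. 
    replace l1 with (l1 - l2 + l2) by ring. rewrite E. ring. }
  set (e := (Cmod (l1 - l2) / 4)%R).
  destruct (H1 e ltac:(unfold e; lra)) as [d1 [Hd1 K1]].
  destruct (H2 e ltac:(unfold e; lra)) as [d2 [Hd2 K2]].
  set (d := (Rmin d1 d2 / 2)%R).
  assert (Hd : (0 < d)%R) by (unfold d; apply Rdiv_lt_0_compat; [apply Rmin_pos|]; lra).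
  set (y := z + RtoC d).
  assert (Hyz : Cmod (y - z) = d). { unfold y. replace (z + RtoC d - z) with (RtoC d) by ring.
    rewrite Cmod_R. apply Rabs_right; lra. }
  assert (Hm: (Cmod (y - z) < d1)%R /\ (Cmod (y - z) < d2)%R). { rewrite Hyz. unfold d.
    pose proof (Rmin_l d1 d2). pose proof (Rmin_r d1 d2). split; lra. }
  specialize (K1 y (proj1 Hm)). specialize (K2 y (proj2 Hm)).
  assert (E: (y - z) * (l1 - l2) = (f y - f z - (y - z) * l2) - (f y - f z - (y - z) * l1)) by ring.
  assert (Cmod ((y - z) * (l1 - l2)) <= 2 * e * Cmod (y - z))%R.
  { rewrite E. eapply Rle_trans. 
    replace (f y - f z - (y - z) * l2 - (f y - f z - (y - z) * l1)) with
      ((f y - f z - (y - z) * l2) + - (f y - f z - (y - z) * l1)) by ring.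
    apply Cmod_triangle. rewrite Cmod_opp. lra. }
  rewrite Cmod_mult, Hyz in H. unfold e in H. nra.
Qed.

Lemma CD_Cinv (w : Complex.C) : w <> 0 -> CD Cinv w (- / (w * w)).
Proof.
  intros Hw. apply CDe_CD. intros eps Heps.
  assert (Hm : (0 < Cmod w)%R) by exact (proj1 (Cmod_gt_0 w) Hw).
  exists (Rmin (Cmod w / 2) (eps * (Cmod w * Cmod w * Cmod w) / 2)). split.
  { apply Rmin_pos. lra. apply Rdiv_lt_0_compat; [|lra]. repeat apply Rmult_lt_0_compat; auto. }
  intros y Hy.
  assert (Hy1 : (Cmod (y - w) < Cmod w / 2)%R) by (eapply Rlt_le_trans; [exact Hy|apply Rmin_l]).
  assert (Hy2 : (Cmod (y - w) < eps * (Cmod w * Cmod w * Cmod w) / 2)%R) by (eapply Rlt_le_trans; [exact Hy|apply Rmin_r]).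
  assert (Hyn : (Cmod w / 2 <= Cmod y)%R). { pose proof (Cmod_rev_tri w y). rewrite Cmod_sub_sym in Hy1. lra. }
  assert (Hy0 : y <> 0). { intros ->. rewrite Cmod_0 in Hyn. lra. }
  replace (/ y - / w - (y - w) * - / (w * w)) with ((y - w) * (y - w) / (y * (w * w))) by (field; auto).
  rewrite Cmod_div by (apply Cmult_neq_0; auto; apply Cmult_neq_0; auto).
  rewrite !Cmod_mult.
  pose proof (Cmod_ge_0 (y - w)).
  apply Rle_div_l. { apply Rmult_lt_0_compat; [lra| nra]. }
  assert (eps * Cmod (y - w) * (Cmod w / 2 * (Cmod w * Cmod w)) <= eps * Cmod (y - w) * (Cmod y * (Cmod w * Cmod w)))%R.
  { apply Rmult_le_compat_l. nra. apply Rmult_le_compat_r. nra. auto. }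
  nra.
Qed.

Lemma CD_inv f z a : CD f z a -> f z <> 0 -> CD (fun y => / f y) z (- a / (f z * f z)).
Proof.
  intros H Hz. eapply CD_eq_l; [| apply (CD_comp Cinv f z a _ H (CD_Cinv _ Hz))]. field. auto.
Qed.

Open Scope R_scope.
Open Scope C_scope.

Lemma RIplus (f g : R -> R) a b : ex_RInt f a b -> ex_RInt g a b ->
  RInt (fun x => f x + g x)%R a b = (RInt f a b + RInt g a b)%R.
Proof. intros H1 H2. exact (RInt_plus f g a b H1 H2). Qed.
Lemma RIminus (f g : R -> R) a b : ex_RInt f a b -> ex_RInt g a b ->
  RInt (fun x => f x - g x)%R a b = (RInt f a b - RInt g a b)%R.
Proof. intros H1 H2. exact (RInt_minus f g a b H1 H2). Qed.
Lemma RIscal (f : R -> R) a b k : ex_RInt f a b ->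
  RInt (fun x => k * f x)%R a b = (k * RInt f a b)%R.
Proof. intros H1. exact (RInt_scal f a b k H1). Qed.
Lemma exRplus (f g : R -> R) a b : ex_RInt f a b -> ex_RInt g a b -> ex_RInt (fun x => f x + g x)%R a b.
Proof. intros H1 H2. exact (ex_RInt_plus f g a b H1 H2). Qed.
Lemma exRminus (f g : R -> R) a b : ex_RInt f a b -> ex_RInt g a b -> ex_RInt (fun x => f x - g x)%R a b.
Proof. intros H1 H2. exact (ex_RInt_minus f g a b H1 H2). Qed.
Lemma exRscal (f : R -> R) a b k : ex_RInt f a b -> ex_RInt (fun x => k * f x)%R a b.
Proof. intros H1. exact (ex_RInt_scal f a b k H1). Qed.
Lemma RIChasles (f : R -> R) a b c : ex_RInt f a b -> ex_RInt f b c ->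
  (RInt f a b + RInt f b c)%R = RInt f a c.
Proof. intros H1 H2. exact (RInt_Chasles f a b c H1 H2). Qed.

Definition Cint (f : R -> Complex.C) (a b : R) : Complex.C :=
  (RInt (fun t => Re (f t)) a b, RInt (fun t => Im (f t)) a b).
Definition exC (f : R -> Complex.C) (a b : R) : Prop :=
  ex_RInt (fun t => Re (f t)) a b /\ ex_RInt (fun t => Im (f t)) a b.

Lemma Cint_Chasles f a b c : exC f a b -> exC f b c -> Cint f a b + Cint f b c = Cint f a c.
Proof.
  intros [H1 H2] [H3 H4]. unfold Cint. apply injective_projections; simpl; apply RIChasles; auto.
Qed.

Lemma Cint_plus f g a b : exC f a b -> exC g a b -> Cint (fun t => f t + g t) a b = Cint f a b + Cint g a b.
Proof.
  intros [H1 H2] [H3 H4]. unfold Cint. apply injective_projections; cbn [fst snd].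
  - transitivity (RInt (fun t => Re (f t)) a b + RInt (fun t => Re (g t)) a b)%R; [|unfold Re, Im; simpl; ring].
    rewrite <- RIplus; auto.
  - transitivity (RInt (fun t => Im (f t)) a b + RInt (fun t => Im (g t)) a b)%R; [|unfold Re, Im; simpl; ring].
    rewrite <- RIplus; auto.
Qed.

Lemma Cint_minus f g a b : exC f a b -> exC g a b -> Cint (fun t => f t - g t) a b = Cint f a b - Cint g a b.
Proof.
  intros [H1 H2] [H3 H4]. unfold Cint. apply injective_projections; cbn [fst snd].
  - transitivity (RInt (fun t => Re (f t)) a b - RInt (fun t => Re (g t)) a b)%R; [|unfold Re, Im; simpl; ring].
    rewrite <- RIminus; auto; try (apply RInt_ext; intros; unfold Re, Im; simpl; ring).
  - transitivity (RInt (fun t => Im (f t)) a b - RInt (fun t => Im (g t)) a b)%R; [|unfold Re, Im; simpl; ring].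
    rewrite <- RIminus; auto; try (apply RInt_ext; intros; unfold Re, Im; simpl; ring).
Qed.

Lemma Cint_scal (c : Complex.C) f a b : exC f a b -> Cint (fun t => c * f t) a b = c * Cint f a b.
Proof.
  intros [H1 H2]. unfold Cint. apply injective_projections; cbn [fst snd].
  - transitivity (Re c * RInt (fun t => Re (f t)) a b - Im c * RInt (fun t => Im (f t)) a b)%R; [|unfold Re, Im; simpl; ring].
    rewrite <- !RIscal, <- RIminus; auto; try apply exRscal; auto.
    all: try (apply RInt_ext; intros; unfold Re, Im; simpl; ring).
  - transitivity (Re c * RInt (fun t => Im (f t)) a b + Im c * RInt (fun t => Re (f t)) a b)%R; [|unfold Re, Im; simpl; ring].
    rewrite <- !RIscal, <- RIplus; auto; try apply exRscal; auto.
    all: try (apply RInt_ext; intros; unfold Re, Im; simpl; ring).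
Qed.

Lemma exC_plus f g a b : exC f a b -> exC g a b -> exC (fun t => f t + g t) a b.
Proof. intros [H1 H2] [H3 H4]; split; simpl; apply exRplus; auto. Qed.
Lemma exC_minus f g a b : exC f a b -> exC g a b -> exC (fun t => f t - g t) a b.
Proof. intros [H1 H2] [H3 H4]; split; simpl.
  - eapply ex_RInt_ext; [|apply (exRminus _ _ a b H1 H3)]. intros; unfold Re, Im; simpl; ring.
  - eapply ex_RInt_ext; [|apply (exRminus _ _ a b H2 H4)]. intros; unfold Re, Im; simpl; ring. Qed.
Lemma exC_scal (c : Complex.C) f a b : exC f a b -> exC (fun t => c * f t) a b.
Proof. intros [H1 H2]; split; simpl.
  - apply exRminus; apply exRscal; auto.
  - apply exRplus; apply exRscal; auto. Qed.

Lemma Cint_ext f g a b : (forall t, Rmin a b <= t <= Rmax a b -> f t = g t) -> Cint f a b = Cint g a b.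
Proof. intros H. unfold Cint. f_equal; apply RInt_ext; intros x Hx; rewrite H; auto; lra. Qed.

Lemma exC_ext f g a b : (forall t, Rmin a b <= t <= Rmax a b -> f t = g t) -> exC f a b -> exC g a b.
Proof. intros H [H1 H2]; split; [eapply ex_RInt_ext; [|exact H1]|eapply ex_RInt_ext; [|exact H2]];
  intros x Hx; simpl; rewrite H; auto; lra. Qed.

Lemma Cmod_pair (x y : R) : Cmod ((x, y)) <= Rabs x + Rabs y.
Proof. apply (Cmod_le_sum (x, y)). Qed.

Lemma Cint_bound f a b M : a <= b -> exC f a b -> (forall t, a <= t <= b -> Cmod (f t) <= M) ->
  Cmod (Cint f a b) <= 2 * (b - a) * M.
Proof.
  intros Hab [H1 H2] HM. unfold Cint. eapply Rle_trans; [apply Cmod_pair|].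
  assert (A1: Rabs (RInt (fun t => Re (f t)) a b) <= (b - a) * M).
  { apply abs_RInt_le_const; auto. intros t Ht. eapply Rle_trans; [apply Cmod_re_le| auto]. }
  assert (A2: Rabs (RInt (fun t => Im (f t)) a b) <= (b - a) * M).
  { apply abs_RInt_le_const; auto. intros t Ht. eapply Rle_trans; [apply Cmod_im_le| auto]. }
  lra.
Qed.

Lemma cont_eps (h : R -> R) x : (forall eps, 0 < eps -> exists del, 0 < del /\ forall t, Rabs (t - x) < del -> Rabs (h t - h x) < eps) -> continuous h x.
Proof.
  intros H. apply continuity_pt_filterlim. intros eps Heps.
  destruct (H eps Heps) as [d [Hd H2]]. exists d. split; auto.
  intros t [_ Ht]. apply H2. exact Ht.
Qed.

Lemma Re_lip (a b : Complex.C) : Rabs (Re a - Re b) <= Cmod (a - b).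
Proof. replace (Re a - Re b)%R with (Re (a - b)) by (unfold Re; simpl; ring). apply Cmod_re_le. Qed.
Lemma Im_lip (a b : Complex.C) : Rabs (Im a - Im b) <= Cmod (a - b).
Proof. replace (Im a - Im b)%R with (Im (a - b)) by (unfold Im; simpl; ring). apply Cmod_im_le. Qed.

Lemma Cmod_h (t s y : R) : Cmod ((t, y) - (s, y)) = Rabs (t - s).
Proof. replace ((t, y) - (s, y)) with (RtoC (t - s)) by (apply injective_projections; simpl; ring). apply Cmod_R. Qed.
Lemma Cmod_v (t s x : R) : Cmod ((x, t) - (x, s)) = Rabs (t - s).
Proof. replace ((x, t) - (x, s)) with (Ci * RtoC (t - s)) by (apply injective_projections; simpl; ring).
  rewrite Cmod_mult, Cmod_Ci, Cmod_R. ring. Qed.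

Lemma cont_line g (p : R -> Complex.C) x l :
  (forall t s, Cmod (p t - p s) = Rabs (t - s)) -> CD g (p x) l ->
  continuous (fun t => Re (g (p t))) x /\ continuous (fun t => Im (g (p t))) x.
Proof.
  intros Hp H. split; apply cont_eps; intros eps Heps;
  destruct (CD_cont _ _ _ H eps Heps) as [d [Hd Hd2]]; exists d; split; auto; intros t Ht.
  - eapply Rle_lt_trans; [apply Re_lip|]. apply Hd2. rewrite Hp. auto.
  - eapply Rle_lt_trans; [apply Im_lip|]. apply Hd2. rewrite Hp. auto.
Qed.

Lemma exC_line g (p : R -> Complex.C) a b :
  (forall t s, Cmod (p t - p s) = Rabs (t - s)) ->
  (forall t, Rmin a b <= t <= Rmax a b -> exists l, CD g (p t) l) -> exC (fun t => g (p t)) a b.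
Proof.
  intros Hp H. split; apply (@ex_RInt_continuous R_CompleteNormedModule); intros t Ht; destruct (H t Ht) as [l Hl];
  apply (cont_line g p t l Hp Hl).
Qed.

Lemma exC_h g a b y : (forall t, Rmin a b <= t <= Rmax a b -> exists l, CD g (t, y) l) -> exC (fun t => g (t, y)) a b.
Proof. intros H. apply (exC_line g (fun t => (t, y))); auto. intros; apply Cmod_h. Qed.
Lemma exC_v g a b x : (forall t, Rmin a b <= t <= Rmax a b -> exists l, CD g (x, t) l) -> exC (fun t => g (x, t)) a b.
Proof. intros H. apply (exC_line g (fun t => (x, t))); auto. intros; apply Cmod_v. Qed.

Open Scope R_scope.
Open Scope C_scope.

Definition Rect (g : Complex.C -> Complex.C) (a1 b1 a2 b2 : R) : Complex.C :=
  Cint (fun t => g (t, a2)) a1 b1 + Ci * Cint (fun t => g (b1, t)) a2 b2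
  - Cint (fun t => g (t, b2)) a1 b1 - Ci * Cint (fun t => g (a1, t)) a2 b2.

Definition OnEdge (a1 b1 a2 b2 : R) (z : Complex.C) : Prop :=
  (a1 <= Re z <= b1 /\ (Im z = a2 \/ Im z = b2)) \/ (a2 <= Im z <= b2 /\ (Re z = a1 \/ Re z = b1)).

Ltac onedge := unfold OnEdge; simpl;
  first [ left; split; [lra| left; reflexivity] | left; split; [lra| right; reflexivity]
        | right; split; [lra| left; reflexivity] | right; split; [lra| right; reflexivity] ].

Definition EdgeCD g a1 b1 a2 b2 := forall z, OnEdge a1 b1 a2 b2 z -> exists l, CD g z l.

Lemma Rmin_le a b : a <= b -> Rmin a b = a. Proof. intros; apply Rmin_left; auto. Qed.
Lemma Rmax_le a b : a <= b -> Rmax a b = b. Proof. intros; apply Rmax_right; auto. Qed.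

Lemma edge_exC g a1 b1 a2 b2 : a1 <= b1 -> a2 <= b2 -> EdgeCD g a1 b1 a2 b2 ->
  exC (fun t => g (t, a2)) a1 b1 /\ exC (fun t => g (b1, t)) a2 b2 /\
  exC (fun t => g (t, b2)) a1 b1 /\ exC (fun t => g (a1, t)) a2 b2.
Proof.
  intros H1 H2 H.
  split; [|split; [|split]]; [ apply exC_h | apply exC_v | apply exC_h | apply exC_v ];
  rewrite ?Rmin_le, ?Rmax_le by auto; intros t Ht; apply H; unfold OnEdge; simpl.
  - left; split; [lra| left; reflexivity].
  - right; split; [lra| right; reflexivity].
  - left; split; [lra| right; reflexivity].
  - right; split; [lra| left; reflexivity].
Qed.

Lemma Rect_plus f g a1 b1 a2 b2 : a1 <= b1 -> a2 <= b2 -> EdgeCD f a1 b1 a2 b2 -> EdgeCD g a1 b1 a2 b2 ->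
  Rect (fun z => f z + g z) a1 b1 a2 b2 = Rect f a1 b1 a2 b2 + Rect g a1 b1 a2 b2.
Proof.
  intros H1 H2 Hf Hg. destruct (edge_exC f _ _ _ _ H1 H2 Hf) as (F1&F2&F3&F4).
  destruct (edge_exC g _ _ _ _ H1 H2 Hg) as (G1&G2&G3&G4).
  unfold Rect. rewrite !Cint_plus by auto. ring.
Qed.

Lemma Rect_minus f g a1 b1 a2 b2 : a1 <= b1 -> a2 <= b2 -> EdgeCD f a1 b1 a2 b2 -> EdgeCD g a1 b1 a2 b2 ->
  Rect (fun z => f z - g z) a1 b1 a2 b2 = Rect f a1 b1 a2 b2 - Rect g a1 b1 a2 b2.
Proof.
  intros H1 H2 Hf Hg. destruct (edge_exC f _ _ _ _ H1 H2 Hf) as (F1&F2&F3&F4).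
  destruct (edge_exC g _ _ _ _ H1 H2 Hg) as (G1&G2&G3&G4).
  unfold Rect. rewrite !Cint_minus by auto. ring.
Qed.

Lemma Rect_scal c f a1 b1 a2 b2 : a1 <= b1 -> a2 <= b2 -> EdgeCD f a1 b1 a2 b2 ->
  Rect (fun z => c * f z) a1 b1 a2 b2 = c * Rect f a1 b1 a2 b2.
Proof.
  intros H1 H2 Hf. destruct (edge_exC f _ _ _ _ H1 H2 Hf) as (F1&F2&F3&F4).
  unfold Rect. rewrite !(Cint_scal c) by auto. ring.
Qed.

Lemma Rect_ext f g a1 b1 a2 b2 : a1 <= b1 -> a2 <= b2 -> (forall z, OnEdge a1 b1 a2 b2 z -> f z = g z) ->
  Rect f a1 b1 a2 b2 = Rect g a1 b1 a2 b2.
Proof.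
  intros H1 H2 H. unfold Rect.
  rewrite (Cint_ext (fun t => f (t, a2)) (fun t => g (t, a2))), (Cint_ext (fun t => f (b1, t)) (fun t => g (b1, t))),
   (Cint_ext (fun t => f (t, b2)) (fun t => g (t, b2))), (Cint_ext (fun t => f (a1, t)) (fun t => g (a1, t))); auto;
  rewrite ?Rmin_le, ?Rmax_le by auto; intros t Ht; apply H; onedge.
Qed.

Lemma EdgeCD_ext f g a1 b1 a2 b2 : (forall z, OnEdge a1 b1 a2 b2 z -> exists d, 0 < d /\ forall y, Cmod (y - z) < d -> f y = g y) ->
  EdgeCD f a1 b1 a2 b2 -> EdgeCD g a1 b1 a2 b2.
Proof.
  intros H Hf z Hz. destruct (Hf z Hz) as [l Hl]. destruct (H z Hz) as [d [Hd Hd2]].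
  exists l. eapply CD_ext_loc; eauto.
Qed.

Lemma Rect_bound f a1 b1 a2 b2 M : a1 <= b1 -> a2 <= b2 -> EdgeCD f a1 b1 a2 b2 ->
  (forall z, OnEdge a1 b1 a2 b2 z -> Cmod (f z) <= M) ->
  Cmod (Rect f a1 b1 a2 b2) <= 4 * (b1 - a1 + (b2 - a2)) * M.
Proof.
  intros H1 H2 Hf HM. destruct (edge_exC f _ _ _ _ H1 H2 Hf) as (F1&F2&F3&F4).
  assert (B1 : Cmod (Cint (fun t => f (t, a2)) a1 b1) <= 2 * (b1 - a1) * M).
  { apply Cint_bound; auto. intros; apply HM; onedge. }
  assert (B2 : Cmod (Cint (fun t => f (b1, t)) a2 b2) <= 2 * (b2 - a2) * M).
  { apply Cint_bound; auto. intros; apply HM; onedge. }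
  assert (B3 : Cmod (Cint (fun t => f (t, b2)) a1 b1) <= 2 * (b1 - a1) * M).
  { apply Cint_bound; auto. intros; apply HM; onedge. }
  assert (B4 : Cmod (Cint (fun t => f (a1, t)) a2 b2) <= 2 * (b2 - a2) * M).
  { apply Cint_bound; auto. intros; apply HM; onedge. }
  unfold Rect.
  set (A := Cint (fun t => f (t, a2)) a1 b1) in *. set (B := Cint (fun t => f (b1, t)) a2 b2) in *.
  set (Cc := Cint (fun t => f (t, b2)) a1 b1) in *. set (D := Cint (fun t => f (a1, t)) a2 b2) in *.
  replace (A + Ci * B - Cc - Ci * D) with (A + (Ci * B + (- Cc + - (Ci * D)))) by ring.
  eapply Rle_trans; [apply Cmod_triangle|].
  eapply Rle_trans; [apply Rplus_le_compat_l; apply Cmod_triangle|].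
  eapply Rle_trans; [apply Rplus_le_compat_l; apply Rplus_le_compat_l; apply Cmod_triangle|].
  rewrite !Cmod_opp, !Cmod_mult, !Cmod_Ci, !Rmult_1_l. lra.
Qed.

Lemma RInt_affine (c0 c1 a b : R) : RInt (fun t => c0 + c1 * t)%R a b = (c0 * (b - a) + c1 * (b * b - a * a) / 2)%R.
Proof.
  apply is_RInt_unique.
  assert (H := @is_RInt_derive R_CompleteNormedModule (fun t => c0 * t + c1 * (t * t) / 2)%R (fun t => c0 + c1 * t)%R a b).
  replace (c0 * (b - a) + c1 * (b * b - a * a) / 2)%R with
    (minus ((fun t => c0 * t + c1 * (t * t) / 2)%R b) ((fun t => c0 * t + c1 * (t * t) / 2)%R a)).
  apply H.
  - intros x _. auto_derive; auto. field.
  - intros x _. apply continuity_pt_filterlim. apply derivable_continuous_pt.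
    apply derivable_pt_plus; [apply derivable_pt_const| apply derivable_pt_mult; [apply derivable_pt_const|apply derivable_pt_id]].
  - unfold minus, plus, opp; simpl. field.
Qed.

Lemma Cint_affine (u v : Complex.C) a b : Cint (fun t => u + v * RtoC t) a b = u * RtoC (b - a) + v * RtoC ((b * b - a * a) / 2).
Proof.
  unfold Cint. apply injective_projections; cbn [fst snd].
  - rewrite (RInt_ext _ (fun t => Re u + Re v * t)%R) by (intros; unfold Re, Im; simpl; ring).
    rewrite RInt_affine. unfold Re, Im; simpl; field.
  - rewrite (RInt_ext _ (fun t => Im u + Im v * t)%R) by (intros; unfold Re, Im; simpl; ring).
    rewrite RInt_affine. unfold Re, Im; simpl; field.
Qed.

Lemma Rect_affine (al be : Complex.C) a1 b1 a2 b2 : Rect (fun z => al + be * z) a1 b1 a2 b2 = 0.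
Proof.
  unfold Rect.
  rewrite (Cint_ext _ (fun t => (al + be * Ci * RtoC a2) + be * RtoC t)).
  2:{ intros; apply injective_projections; simpl; ring. }
  rewrite (Cint_ext (fun t => al + be * (b1, t)) (fun t => (al + be * RtoC b1) + be * Ci * RtoC t)).
  2:{ intros; apply injective_projections; simpl; ring. }
  rewrite (Cint_ext (fun t => al + be * (t, b2)) (fun t => (al + be * Ci * RtoC b2) + be * RtoC t)).
  2:{ intros; apply injective_projections; simpl; ring. }
  rewrite (Cint_ext (fun t => al + be * (a1, t)) (fun t => (al + be * RtoC a1) + be * Ci * RtoC t)).
  2:{ intros; apply injective_projections; simpl; ring. }
  rewrite !Cint_affine. apply injective_projections; simpl; field.
Qed.

Open Scope R_scope.
Open Scope C_scope.

Definition Good g (a1 b1 a2 b2 : R) := forall z, a1 <= Re z <= b1 -> a2 <= Im z <= b2 -> exists l, CD g z l.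

Lemma OnEdge_in a1 b1 a2 b2 z : a1 <= b1 -> a2 <= b2 -> OnEdge a1 b1 a2 b2 z -> a1 <= Re z <= b1 /\ a2 <= Im z <= b2.
Proof. unfold OnEdge; intros; destruct H1 as [[H3 [H4|H4]]|[H3 [H4|H4]]]; rewrite H4; lra. Qed.

Lemma Good_Edge g a1 b1 a2 b2 : a1 <= b1 -> a2 <= b2 -> Good g a1 b1 a2 b2 -> EdgeCD g a1 b1 a2 b2.
Proof. intros H1 H2 H z Hz. destruct (OnEdge_in _ _ _ _ _ H1 H2 Hz). apply H; auto. Qed.

Lemma Good_h g a1 b1 a2 b2 s t y : Good g a1 b1 a2 b2 -> a1 <= s -> s <= t -> t <= b1 -> a2 <= y <= b2 ->
  exC (fun u => g (u, y)) s t.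
Proof. intros H H1 H2 H3 H4. apply exC_h. rewrite Rmin_le, Rmax_le by auto. intros u Hu. apply H; simpl; lra. Qed.
Lemma Good_v g a1 b1 a2 b2 s t x : Good g a1 b1 a2 b2 -> a2 <= s -> s <= t -> t <= b2 -> a1 <= x <= b1 ->
  exC (fun u => g (x, u)) s t.
Proof. intros H H1 H2 H3 H4. apply exC_v. rewrite Rmin_le, Rmax_le by auto. intros u Hu. apply H; simpl; lra. Qed.

Lemma split_x g a1 c b1 a2 b2 :
  exC (fun t => g (t, a2)) a1 c -> exC (fun t => g (t, a2)) c b1 ->
  exC (fun t => g (t, b2)) a1 c -> exC (fun t => g (t, b2)) c b1 ->
  Rect g a1 b1 a2 b2 = Rect g a1 c a2 b2 + Rect g c b1 a2 b2.
Proof.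
  intros H1 H2 H3 H4. unfold Rect. rewrite <- (Cint_Chasles _ a1 c b1 H1 H2), <- (Cint_Chasles _ a1 c b1 H3 H4). ring.
Qed.

Lemma split_y g a1 b1 a2 c b2 :
  exC (fun t => g (a1, t)) a2 c -> exC (fun t => g (a1, t)) c b2 ->
  exC (fun t => g (b1, t)) a2 c -> exC (fun t => g (b1, t)) c b2 ->
  Rect g a1 b1 a2 b2 = Rect g a1 b1 a2 c + Rect g a1 b1 c b2.
Proof.
  intros H1 H2 H3 H4. unfold Rect. rewrite <- (Cint_Chasles _ a2 c b2 H1 H2), <- (Cint_Chasles _ a2 c b2 H3 H4). ring.
Qed.

Record rect := mkR { ra1 : R; rb1 : R; ra2 : R; rb2 : R }.
Definition RI g r := Rect g (ra1 r) (rb1 r) (ra2 r) (rb2 r).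
Definition WF r := ra1 r <= rb1 r /\ ra2 r <= rb2 r.
Definition m1 r := ((ra1 r + rb1 r) / 2)%R.
Definition m2 r := ((ra2 r + rb2 r) / 2)%R.
Definition q1 r := mkR (ra1 r) (m1 r) (ra2 r) (m2 r).
Definition q2 r := mkR (m1 r) (rb1 r) (ra2 r) (m2 r).
Definition q3 r := mkR (ra1 r) (m1 r) (m2 r) (rb2 r).
Definition q4 r := mkR (m1 r) (rb1 r) (m2 r) (rb2 r).

Lemma quad g r : WF r -> Good g (ra1 r) (rb1 r) (ra2 r) (rb2 r) ->
  RI g r = RI g (q1 r) + RI g (q2 r) + RI g (q3 r) + RI g (q4 r).
Proof.
  intros [W1 W2] H. unfold RI, q1, q2, q3, q4, m1, m2; simpl.
  set (c1 := ((ra1 r + rb1 r) / 2)%R). set (c2 := ((ra2 r + rb2 r) / 2)%R).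
  assert (C1 : ra1 r <= c1 <= rb1 r) by (unfold c1; lra).
  assert (C2 : ra2 r <= c2 <= rb2 r) by (unfold c2; lra).
  rewrite (split_x g (ra1 r) c1 (rb1 r)) by (eapply Good_h; eauto; lra).
  rewrite (split_y g (ra1 r) c1 (ra2 r) c2 (rb2 r)) by (eapply Good_v; eauto; lra).
  rewrite (split_y g c1 (rb1 r) (ra2 r) c2 (rb2 r)) by (eapply Good_v; eauto; lra).
  ring.
Qed.

Definition pick g r :=
  if Rle_dec (Cmod (RI g r) / 4) (Cmod (RI g (q1 r))) then q1 r
  else if Rle_dec (Cmod (RI g r) / 4) (Cmod (RI g (q2 r))) then q2 r
  else if Rle_dec (Cmod (RI g r) / 4) (Cmod (RI g (q3 r))) then q3 r
  else q4 r.

Lemma pick_big g r : WF r -> Good g (ra1 r) (rb1 r) (ra2 r) (rb2 r) ->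
  Cmod (RI g r) <= 4 * Cmod (RI g (pick g r)).
Proof.
  intros W H. unfold pick.
  destruct Rle_dec; [lra|]. destruct Rle_dec; [lra|]. destruct Rle_dec; [lra|].
  rewrite (quad g r W H) at 1.
  pose proof (Cmod_triangle (RI g (q1 r) + RI g (q2 r) + RI g (q3 r)) (RI g (q4 r))).
  pose proof (Cmod_triangle (RI g (q1 r) + RI g (q2 r)) (RI g (q3 r))).
  pose proof (Cmod_triangle (RI g (q1 r)) (RI g (q2 r))).
  rewrite (quad g r W H) in n, n0, n1. lra.
Qed.

Definition child r q := ra1 r <= ra1 q /\ rb1 q <= rb1 r /\ ra2 r <= ra2 q /\ rb2 q <= rb2 r /\
  (rb1 q - ra1 q = (rb1 r - ra1 r) / 2)%R /\ (rb2 q - ra2 q = (rb2 r - ra2 r) / 2)%R.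

Lemma pick_child g r : WF r -> child r (pick g r).
Proof.
  intros [W1 W2]. unfold pick, child, q1, q2, q3, q4, m1, m2.
  repeat destruct Rle_dec; simpl; repeat split; lra.
Qed.

Fixpoint rs g r0 n := match n with O => r0 | S n => pick g (rs g r0 n) end.

Lemma pow2_big (x d : R) : 0 < d -> exists n : nat, x / 2 ^ n < d.
Proof.
  intros Hd.
  assert (Hn : forall n : nat, INR n <= 2 ^ n).
  { induction n. simpl; lra. rewrite S_INR. simpl. assert (1 <= 2 ^ n) by (apply pow_R1_Rle; lra). lra. }
  destruct (Rle_lt_dec x 0) as [Hx|Hx].
  { exists O. simpl. rewrite Rdiv_1_r. lra. }
  destruct (archimed (x / d)) as [H1 _].
  assert (Hz : (0 <= up (x / d))%Z). { apply le_IZR. assert (0 < x / d) by (apply Rdiv_lt_0_compat; lra). lra. }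
  exists (Z.to_nat (up (x / d))).
  assert (Hp : 0 < 2 ^ Z.to_nat (up (x / d))) by (apply pow_lt; lra).
  assert (E : INR (Z.to_nat (up (x / d))) = IZR (up (x / d))).
  { rewrite INR_IZR_INZ. rewrite Z2Nat.id; auto. }
  specialize (Hn (Z.to_nat (up (x / d)))). rewrite E in Hn.
  apply Rlt_div_l; auto.
  assert (x < d * IZR (up (x / d))).
  { apply (Rmult_lt_compat_l d) in H1; auto. replace (d * (x / d))%R with x in H1 by (field; lra). lra. }
  nra.
Qed.

Lemma CD_affine (al be z : Complex.C) : CD (fun y => al + be * y) z be.
Proof.
  eapply CD_eq_l; [|apply CD_plus; [apply CD_const| apply CD_mult; [apply CD_const|apply CD_id]]]. cbv beta. ring.
Qed.

Lemma small_zero x K : 0 < K -> (forall eps, 0 < eps -> x <= eps * K) -> x <= 0.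
Proof.
  intros HK H. destruct (Rle_lt_dec x 0); auto.
  specialize (H (x / (2 * K))%R ltac:(apply Rdiv_lt_0_compat; lra)).
  replace (x / (2 * K) * K)%R with (x / 2)%R in H by (field; lra). lra.
Qed.

Lemma Goursat g a1 b1 a2 b2 : a1 <= b1 -> a2 <= b2 -> Good g a1 b1 a2 b2 -> Rect g a1 b1 a2 b2 = 0.
Proof.
  intros H1 H2 HG.
  set (r0 := mkR a1 b1 a2 b2).
  set (w0 := (b1 - a1)%R). set (h0 := (b2 - a2)%R).
  assert (Inv : forall n, WF (rs g r0 n) /\ a1 <= ra1 (rs g r0 n) /\ rb1 (rs g r0 n) <= b1 /\
     a2 <= ra2 (rs g r0 n) /\ rb2 (rs g r0 n) <= b2 /\
     (rb1 (rs g r0 n) - ra1 (rs g r0 n) = w0 / 2 ^ n)%R /\ (rb2 (rs g r0 n) - ra2 (rs g r0 n) = h0 / 2 ^ n)%R /\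
     Cmod (Rect g a1 b1 a2 b2) <= 4 ^ n * Cmod (RI g (rs g r0 n))).
  { induction n as [|n IH].
    - simpl. unfold WF, RI, w0, h0; simpl. repeat split; try lra.
    - destruct IH as (W & A1 & B1 & A2 & B2 & E1 & E2 & K).
      assert (Gr : Good g (ra1 (rs g r0 n)) (rb1 (rs g r0 n)) (ra2 (rs g r0 n)) (rb2 (rs g r0 n))).
      { intros z Hz1 Hz2. apply HG; lra. }
      pose proof (pick_big g _ W Gr) as PB.
      destruct (pick_child g _ W) as (C1 & C2 & C3 & C4 & C5 & C6).
      simpl rs. set (q := pick g (rs g r0 n)) in *.
      assert (Hp : 0 < 2 ^ n) by (apply pow_lt; lra).
      assert (Hp4 : 0 < 4 ^ n) by (apply pow_lt; lra).
      unfold WF in *. simpl pow.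
      repeat split; try lra.
      + rewrite C5, E1. field. lra.
      + rewrite C6, E2. field. lra.
      + eapply Rle_trans; [exact K|]. apply Rle_trans with (4 ^ n * (4 * Cmod (RI g q)))%R; [apply Rmult_le_compat_l; lra| right; ring]. }
  assert (Mono : forall n k, (n <= k)%nat -> ra1 (rs g r0 n) <= ra1 (rs g r0 k) /\ rb1 (rs g r0 k) <= rb1 (rs g r0 n) /\
     ra2 (rs g r0 n) <= ra2 (rs g r0 k) /\ rb2 (rs g r0 k) <= rb2 (rs g r0 n)).
  { intros n k Hnk. induction Hnk. lra.
    destruct (Inv m) as (W & _).
    destruct (pick_child g _ W) as (C1 & C2 & C3 & C4 & _). simpl rs. lra. }
  assert (Cross1 : forall n k, ra1 (rs g r0 n) <= rb1 (rs g r0 k)).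
  { intros n k. destruct (Nat.le_ge_cases n k) as [Hl|Hl].
    - destruct (Mono _ _ Hl) as (M1 & _). destruct (Inv k) as ([W1 _] & _). lra.
    - destruct (Mono _ _ Hl) as (_ & M2 & _). destruct (Inv n) as ([W1 _] & _). lra. }
  assert (Cross2 : forall n k, ra2 (rs g r0 n) <= rb2 (rs g r0 k)).
  { intros n k. destruct (Nat.le_ge_cases n k) as [Hl|Hl].
    - destruct (Mono _ _ Hl) as (_ & _ & M1 & _). destruct (Inv k) as ([_ W1] & _). lra.
    - destruct (Mono _ _ Hl) as (_ & _ & _ & M2). destruct (Inv n) as ([_ W1] & _). lra. }
  destruct (completeness (fun x => exists n, x = ra1 (rs g r0 n))) as [p1 [Ub1 Lub1]].
  { exists b1. intros x [n ->]. destruct (Inv n) as (_ & _ & B & _). specialize (Cross1 n n). lra. }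
  { exists a1. exists O. reflexivity. }
  destruct (completeness (fun x => exists n, x = ra2 (rs g r0 n))) as [p2 [Ub2 Lub2]].
  { exists b2. intros x [n ->]. destruct (Inv n) as (_ & _ & _ & _ & B & _). specialize (Cross2 n n). lra. }
  { exists a2. exists O. reflexivity. }
  assert (P1 : forall n, ra1 (rs g r0 n) <= p1 <= rb1 (rs g r0 n)).
  { intros n. split. apply Ub1. exists n; auto. apply Lub1. intros x [k ->]. apply Cross1. }
  assert (P2 : forall n, ra2 (rs g r0 n) <= p2 <= rb2 (rs g r0 n)).
  { intros n. split. apply Ub2. exists n; auto. apply Lub2. intros x [k ->]. apply Cross2. }
  set (p := (p1, p2) : Complex.C).
  destruct (HG p) as [l Hl].
  { specialize (P1 O). simpl in P1. simpl. lra. }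
  { specialize (P2 O). simpl in P2. simpl. lra. }
  apply CD_CDe in Hl.
  apply Cmod_eq_0. apply Rle_antisym; [|apply Cmod_ge_0].
  apply (small_zero _ (4 * (w0 + h0) * (w0 + h0) + 1)).
  { assert (0 <= w0 + h0) by (unfold w0, h0; lra). nra. }
  intros eps Heps.
  destruct (Hl eps Heps) as [d [Hd Hd2]].
  destruct (pow2_big (w0 + h0) d Hd) as [n Hn].
  destruct (Inv n) as ([W1 W2] & A1 & B1 & A2 & B2 & E1 & E2 & K).
  set (r := rs g r0 n) in *.
  assert (Gr : Good g (ra1 r) (rb1 r) (ra2 r) (rb2 r)). { intros z Hz1 Hz2. apply HG; lra. }
  assert (Hp : 0 < 2 ^ n) by (apply pow_lt; lra).
  set (wn := (w0 / 2 ^ n)%R) in *. set (hn := (h0 / 2 ^ n)%R) in *.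
  assert (Hwh : (wn + hn = (w0 + h0) / 2 ^ n)%R) by (unfold wn, hn; field; lra).
  assert (EA : EdgeCD (fun y => (g p - l * p) + l * y) (ra1 r) (rb1 r) (ra2 r) (rb2 r)).
  { intros z _. eexists. apply CD_affine. }
  assert (EG : EdgeCD g (ra1 r) (rb1 r) (ra2 r) (rb2 r)) by (apply Good_Edge; auto).
  assert (ER : RI g r = Rect (fun y => g y - ((g p - l * p) + l * y)) (ra1 r) (rb1 r) (ra2 r) (rb2 r)).
  { rewrite Rect_minus, Rect_affine by auto. unfold RI. ring. }
  assert (BR : Cmod (RI g r) <= 4 * (wn + hn) * (eps * (wn + hn))).
  { rewrite ER. replace (wn + hn)%R with (rb1 r - ra1 r + (rb2 r - ra2 r))%R at 1 by lra.
    apply Rect_bound; auto.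
    - apply EdgeCD_ext with (f := fun y => g y - (g p - l * p + l * y)).
      { intros z _. exists 1%R. split; [lra|]. auto. }
      intros z Hz. destruct (EG z Hz) as [l1 Hl1]. destruct (EA z Hz) as [l2 Hl2].
      eexists. apply CD_minus; eauto.
    - intros z Hz. destruct (OnEdge_in _ _ _ _ _ W1 W2 Hz) as [Z1 Z2].
      assert (Cmod (z - p) <= wn + hn).
      { eapply Rle_trans; [apply Cmod_le_sum|]. specialize (P1 n). specialize (P2 n). fold r in P1, P2.
        replace (Re (z - p)) with (Re z - p1)%R by (unfold p, Re; simpl; ring).
        replace (Im (z - p)) with (Im z - p2)%R by (unfold p, Im; simpl; ring).
        apply Rplus_le_compat; apply Rabs_le; lra. }
      replace (g z - (g p - l * p + l * z)) with (g z - g p - (z - p) * l) by ring.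
      eapply Rle_trans; [apply Hd2|].
      + eapply Rle_lt_trans; [exact H|]. rewrite Hwh. exact Hn.
      + apply Rmult_le_compat_l; lra. }
  eapply Rle_trans; [exact K|].
  assert (Hp4 : (4 ^ n = 2 ^ n * 2 ^ n)%R) by (rewrite <- Rpow_mult_distr; f_equal; lra).
  assert (Hq : (4 ^ n * (4 * (wn + hn) * (eps * (wn + hn))) = eps * (4 * (w0 + h0) * (w0 + h0)))%R).
  { rewrite Hwh, Hp4. field. lra. }
  assert (0 < 4 ^ n)%R by (apply pow_lt; lra).
  apply Rle_trans with (4 ^ n * (4 * (wn + hn) * (eps * (wn + hn))))%R.
  { apply Rmult_le_compat_l; lra. }
  rewrite Hq. nra.
Qed.

Open Scope R_scope.
Open Scope C_scope.

Lemma neq_pt (w : Complex.C) x y : (Re w <> x \/ Im w <> y) -> w <> (x, y).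
Proof. intros [H|H] E; rewrite E in H; simpl in H; auto. Qed.

Definition GoodX g a1 b1 a2 b2 (z : Complex.C) :=
  forall w, a1 <= Re w <= b1 -> a2 <= Im w <= b2 -> w <> z -> exists l, CD g w l.

Lemma GoodX_Good g a1 b1 a2 b2 z c1 d1 c2 d2 : GoodX g a1 b1 a2 b2 z ->
  a1 <= c1 -> d1 <= b1 -> a2 <= c2 -> d2 <= b2 ->
  (d1 < Re z \/ Re z < c1 \/ d2 < Im z \/ Im z < c2) -> Good g c1 d1 c2 d2.
Proof.
  intros H A1 A2 A3 A4 Hz w W1 W2. apply H; try lra.
  intros E. subst w. lra.
Qed.

Lemma GoodX_h g a1 b1 a2 b2 z s t yy : GoodX g a1 b1 a2 b2 z -> a1 <= s -> s <= t -> t <= b1 -> a2 <= yy <= b2 ->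
  yy <> Im z -> exC (fun u => g (u, yy)) s t.
Proof.
  intros H H1 H2 H3 H4 H5. apply exC_h. rewrite Rmin_le, Rmax_le by auto. intros u Hu. apply H; simpl; try lra.
  intros E. rewrite <- E in H5. simpl in H5. auto.
Qed.
Lemma GoodX_v g a1 b1 a2 b2 z s t xx : GoodX g a1 b1 a2 b2 z -> a2 <= s -> s <= t -> t <= b2 -> a1 <= xx <= b1 ->
  xx <> Re z -> exC (fun u => g (xx, u)) s t.
Proof.
  intros H H1 H2 H3 H4 H5. apply exC_v. rewrite Rmin_le, Rmax_le by auto. intros u Hu. apply H; simpl; try lra.
  intros E. rewrite <- E in H5. simpl in H5. auto.
Qed.

Lemma reduce g a1 b1 a2 b2 x y h : GoodX g a1 b1 a2 b2 (x, y) -> 0 < h ->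
  a1 < x - h -> x + h < b1 -> a2 < y - h -> y + h < b2 ->
  Rect g a1 b1 a2 b2 = Rect g (x - h) (x + h) (y - h) (y + h).
Proof.
  intros H Hh A1 A2 A3 A4.
  rewrite (split_x g a1 (x - h) b1) by (eapply GoodX_h; eauto; simpl; lra).
  rewrite (Goursat g a1 (x - h) a2 b2) by (try eapply GoodX_Good; eauto; simpl; lra).
  rewrite (split_x g (x - h) (x + h) b1) by (eapply GoodX_h; eauto; simpl; lra).
  rewrite (Goursat g (x + h) b1 a2 b2) by (try eapply GoodX_Good; eauto; simpl; lra).
  rewrite (split_y g (x - h) (x + h) a2 (y - h) b2) by (eapply GoodX_v; eauto; simpl; lra).
  rewrite (Goursat g (x - h) (x + h) a2 (y - h)) by (try eapply GoodX_Good; eauto; simpl; lra).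
  rewrite (split_y g (x - h) (x + h) (y - h) (y + h) b2) by (eapply GoodX_v; eauto; simpl; lra).
  rewrite (Goursat g (x - h) (x + h) (y + h) b2) by (try eapply GoodX_Good; eauto; simpl; lra).
  ring.
Qed.

Lemma GoursatX g a1 b1 a2 b2 x y M d0 : GoodX g a1 b1 a2 b2 (x, y) ->
  a1 < x < b1 -> a2 < y < b2 -> 0 < d0 ->
  (forall w, Cmod (w - (x, y)) < d0 -> Cmod (g w) <= M) ->
  Rect g a1 b1 a2 b2 = 0.
Proof.
  intros H Hx Hy Hd HM.
  assert (M0 : 0 <= M). { eapply Rle_trans; [apply Cmod_ge_0| apply (HM (x, y))].
    replace ((x, y) - (x, y)) with (RtoC 0) by ring. rewrite Cmod_0. auto. }
  set (hm := Rmin (Rmin (x - a1) (b1 - x)) (Rmin (Rmin (y - a2) (b2 - y)) d0)).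
  assert (Hhm : 0 < hm). { unfold hm. repeat apply Rmin_pos; lra. }
  apply Cmod_eq_0. apply Rle_antisym; [|apply Cmod_ge_0].
  apply (small_zero _ (16 * M + 1)); [lra|].
  intros eps Heps.
  set (h := Rmin (hm / 4) eps).
  assert (Hh : 0 < h) by (unfold h; apply Rmin_pos; lra).
  assert (Hh1 : h <= hm / 4) by apply Rmin_l.
  assert (Hh2 : h <= eps) by apply Rmin_r.
  assert (B1 : hm <= x - a1 /\ hm <= b1 - x /\ hm <= y - a2 /\ hm <= b2 - y /\ hm <= d0).
  { unfold hm. pose proof (Rmin_l (Rmin (x - a1) (b1 - x)) (Rmin (Rmin (y - a2) (b2 - y)) d0)).
    pose proof (Rmin_r (Rmin (x - a1) (b1 - x)) (Rmin (Rmin (y - a2) (b2 - y)) d0)).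
    pose proof (Rmin_l (x - a1) (b1 - x)). pose proof (Rmin_r (x - a1) (b1 - x)).
    pose proof (Rmin_l (Rmin (y - a2) (b2 - y)) d0). pose proof (Rmin_r (Rmin (y - a2) (b2 - y)) d0).
    pose proof (Rmin_l (y - a2) (b2 - y)). pose proof (Rmin_r (y - a2) (b2 - y)).
    repeat split; lra. }
  destruct B1 as (B1 & B2 & B3 & B4 & B5). clearbody h hm.
  rewrite (reduce g a1 b1 a2 b2 x y h) by (auto; lra).
  eapply Rle_trans.
  - apply Rect_bound; try lra.
    + intros w Hw. destruct (OnEdge_in (x - h) (x + h) (y - h) (y + h) w ltac:(lra) ltac:(lra) Hw) as [W1 W2].
      apply H; try lra. apply neq_pt.
      destruct Hw as [[_ [E|E]]|[_ [E|E]]]; rewrite E; lra.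
    + intros w Hw. apply HM. destruct (OnEdge_in (x - h) (x + h) (y - h) (y + h) w ltac:(lra) ltac:(lra) Hw) as [W1 W2].
      eapply Rle_lt_trans; [apply Cmod_le_sum|].
      replace (Re (w - (x, y))) with (Re w - x)%R by (unfold Re; simpl; ring).
      replace (Im (w - (x, y))) with (Im w - y)%R by (unfold Im; simpl; ring).
      assert (Rabs (Re w - x) <= h) by (apply Rabs_le; lra).
      assert (Rabs (Im w - y) <= h) by (apply Rabs_le; lra). lra.
  - replace (x + h - (x - h) + (y + h - (y - h)))%R with (4 * h)%R by ring.
    assert (h * M <= eps * M)%R by (apply Rmult_le_compat_r; lra).
    nra.
Qed.

Lemma Cauchy f a1 b1 a2 b2 x y : Good f a1 b1 a2 b2 -> a1 < x < b1 -> a2 < y < b2 ->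
  Rect (fun w => f w * / (w - (x, y))) a1 b1 a2 b2 = f (x, y) * Rect (fun w => / (w - (x, y))) a1 b1 a2 b2.
Proof.
  intros Hf Hx Hy. set (z := (x, y) : Complex.C).
  set (g := fun w => (f w - f z) * / (w - z)).
  destruct (Hf z) as [l Hl]; try (simpl; lra).
  assert (Hle := CD_CDe _ _ _ Hl). destruct (Hle 1%R ltac:(lra)) as [d [Hd Hd2]].
  assert (CDg : GoodX g a1 b1 a2 b2 z).
  { intros w W1 W2 Wz. destruct (Hf w W1 W2) as [lw Hlw].
    assert (Hwz : w - z <> 0). { intros E. apply Wz. replace w with (w - z + z) by ring. rewrite E. ring. }
    eexists. apply CD_mult.
    - apply CD_minus; [exact Hlw| apply CD_const].
    - apply CD_inv; auto. apply CD_minus; [apply CD_id| apply CD_const]. }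
  assert (Hg0 : Rect g a1 b1 a2 b2 = 0).
  { apply (GoursatX g a1 b1 a2 b2 x y (Cmod l + 1) d); auto.
    intros w Hw. unfold g. destruct (Ceq_dec w z) as [E|E].
    - rewrite E. replace (f z - f z) with (RtoC 0) by ring. rewrite Cmult_0_l, Cmod_0.
      pose proof (Cmod_ge_0 l). lra.
    - assert (Hwz : w - z <> 0). { intros E2. apply E. replace w with (w - z + z) by ring. rewrite E2. ring. }
      assert (Hp : (0 < Cmod (w - z))%R) by exact (proj1 (Cmod_gt_0 _) Hwz).
      rewrite Cmod_mult, Cmod_inv by auto.
      specialize (Hd2 w Hw).
      assert (Cmod (f w - f z) <= (Cmod l + 1) * Cmod (w - z))%R.
      { replace (f w - f z) with ((f w - f z - (w - z) * l) + (w - z) * l) by ring.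
        eapply Rle_trans; [apply Cmod_triangle|]. rewrite Cmod_mult. lra. }
      apply (Rmult_le_reg_r (Cmod (w - z))); auto.
      rewrite Rmult_assoc, Rinv_l by lra. lra. }
  assert (W1 : a1 <= b1) by lra. assert (W2 : a2 <= b2) by lra.
  assert (Ez : forall w, OnEdge a1 b1 a2 b2 w -> w - z <> 0).
  { intros w Hw E. assert (w = z) by (replace w with (w - z + z) by ring; rewrite E; ring).
    subst w. unfold z in Hw. destruct Hw as [[_ [E2|E2]]|[_ [E2|E2]]]; simpl in E2; lra. }
  assert (EI : EdgeCD (fun w => / (w - z)) a1 b1 a2 b2).
  { intros w Hw. eexists. apply CD_inv; [|apply Ez; auto]. apply CD_minus; [apply CD_id| apply CD_const]. }
  assert (EF : EdgeCD (fun w => f w * / (w - z)) a1 b1 a2 b2).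
  { intros w Hw. destruct (OnEdge_in _ _ _ _ _ W1 W2 Hw) as [Z1 Z2]. destruct (Hf w Z1 Z2) as [lw Hlw].
    destruct (EI w Hw) as [li Hli]. eexists. apply CD_mult; eauto. }
  rewrite <- (Rect_scal (f z) (fun w => / (w - z))) by auto.
  apply Cminus_eq_0 || idtac.
  assert (E2 : Rect g a1 b1 a2 b2 = Rect (fun w => f w * / (w - z)) a1 b1 a2 b2 - Rect (fun w => f z * / (w - z)) a1 b1 a2 b2).
  { rewrite <- Rect_minus; auto.
    - apply Rect_ext; auto. intros w _. unfold g. ring.
    - intros w Hw. destruct (EI w Hw) as [li Hli]. eexists. apply CD_mult; [apply CD_const| eauto]. }
  rewrite Hg0 in E2. 
  replace (Rect (fun w => f w * / (w - z)) a1 b1 a2 b2) with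
    (Rect (fun w => f w * / (w - z)) a1 b1 a2 b2 - Rect (fun w => f z * / (w - z)) a1 b1 a2 b2 + Rect (fun w => f z * / (w - z)) a1 b1 a2 b2) by ring.
  rewrite <- E2. ring.
Qed.

Open Scope R_scope.
Open Scope C_scope.

Lemma CD_of_quad F z0 L r K : 0 < r -> 0 <= K ->
  (forall z, Cmod (z - z0) < r -> Cmod (F z - F z0 - (z - z0) * L) <= K * (Cmod (z - z0) * Cmod (z - z0))) ->
  CD F z0 L.
Proof.
  intros Hr HK H. apply CDe_CD. intros eps Heps.
  exists (Rmin r (eps / (K + 1))). split. { apply Rmin_pos; auto. apply Rdiv_lt_0_compat; lra. }
  intros z Hz. assert (H1 : Cmod (z - z0) < r) by (eapply Rlt_le_trans; [exact Hz| apply Rmin_l]).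
  assert (H2 : Cmod (z - z0) < eps / (K + 1)) by (eapply Rlt_le_trans; [exact Hz| apply Rmin_r]).
  eapply Rle_trans; [apply H; auto|].
  pose proof (Cmod_ge_0 (z - z0)).
  assert (K * Cmod (z - z0) <= eps)%R.
  { apply Rle_trans with ((K + 1) * (eps / (K + 1)))%R.
    - assert (K * Cmod (z - z0) <= (K + 1) * Cmod (z - z0))%R by nra. nra.
    - right; field; lra. }
  nra.
Qed.

Lemma Cmod_abs_diff (a b : Complex.C) : Rabs (Cmod a - Cmod b) <= Cmod (a - b).
Proof.
  apply Rabs_le. split.
  - pose proof (Cmod_rev_tri b a). rewrite Cmod_sub_sym in H. lra.
  - pose proof (Cmod_rev_tri a b). lra.
Qed.

Lemma line_bound h (p : R -> Complex.C) a b : a <= b ->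
  (forall t s, Cmod (p t - p s) = Rabs (t - s)) ->
  (forall t, a <= t <= b -> exists l, CD h (p t) l) ->
  exists M, forall t, a <= t <= b -> Cmod (h (p t)) <= M.
Proof.
  intros Hab Hp H.
  destruct (continuity_ab_maj (fun t => Cmod (h (p t))) a b Hab) as [Mx [HM _]].
  { intros c Hc. apply continuity_pt_filterlim. apply cont_eps. intros eps Heps.
    destruct (H c Hc) as [l Hl]. destruct (CD_cont _ _ _ Hl eps Heps) as [d [Hd Hd2]].
    exists d. split; auto. intros t Ht. eapply Rle_lt_trans; [apply Cmod_abs_diff|]. apply Hd2. rewrite Hp. auto. }
  exists (Cmod (h (p Mx))). auto.
Qed.

Lemma edge_bound h a1 b1 a2 b2 : a1 <= b1 -> a2 <= b2 -> EdgeCD h a1 b1 a2 b2 ->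
  exists M, forall w, OnEdge a1 b1 a2 b2 w -> Cmod (h w) <= M.
Proof.
  intros H1 H2 H.
  destruct (line_bound h (fun t => (t, a2)) a1 b1 H1) as [M1 HM1]; [intros; apply Cmod_h| intros t Ht; apply H; onedge|].
  destruct (line_bound h (fun t => (t, b2)) a1 b1 H1) as [M2 HM2]; [intros; apply Cmod_h| intros t Ht; apply H; onedge|].
  destruct (line_bound h (fun t => (a1, t)) a2 b2 H2) as [M3 HM3]; [intros; apply Cmod_v| intros t Ht; apply H; onedge|].
  destruct (line_bound h (fun t => (b1, t)) a2 b2 H2) as [M4 HM4]; [intros; apply Cmod_v| intros t Ht; apply H; onedge|].
  exists (Rmax (Rmax M1 M2) (Rmax M3 M4)). intros [wr wi] Hw.
  pose proof (Rmax_l (Rmax M1 M2) (Rmax M3 M4)). pose proof (Rmax_r (Rmax M1 M2) (Rmax M3 M4)).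
  pose proof (Rmax_l M1 M2). pose proof (Rmax_r M1 M2). pose proof (Rmax_l M3 M4). pose proof (Rmax_r M3 M4).
  unfold OnEdge in Hw; simpl in Hw. destruct Hw as [[Hr [E|E]]|[Hr [E|E]]]; subst.
  - specialize (HM1 wr Hr). lra.
  - specialize (HM2 wr Hr). lra.
  - specialize (HM3 wi Hr). lra.
  - specialize (HM4 wi Hr). lra.
Qed.

Definition dmin a1 b1 a2 b2 (z : Complex.C) := Rmin (Rmin (Re z - a1) (b1 - Re z)) (Rmin (Im z - a2) (b2 - Im z)).

Lemma dmin_pos a1 b1 a2 b2 z : a1 < Re z < b1 -> a2 < Im z < b2 -> 0 < dmin a1 b1 a2 b2 z.
Proof. intros; unfold dmin; repeat apply Rmin_pos; lra. Qed.

Lemma edge_far a1 b1 a2 b2 z w : OnEdge a1 b1 a2 b2 w -> dmin a1 b1 a2 b2 z <= Cmod (w - z).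
Proof.
  intros Hw. unfold dmin.
  pose proof (Rmin_l (Rmin (Re z - a1) (b1 - Re z)) (Rmin (Im z - a2) (b2 - Im z))).
  pose proof (Rmin_r (Rmin (Re z - a1) (b1 - Re z)) (Rmin (Im z - a2) (b2 - Im z))).
  pose proof (Rmin_l (Re z - a1) (b1 - Re z)). pose proof (Rmin_r (Re z - a1) (b1 - Re z)).
  pose proof (Rmin_l (Im z - a2) (b2 - Im z)). pose proof (Rmin_r (Im z - a2) (b2 - Im z)).
  pose proof (Cmod_re_le (w - z)). pose proof (Cmod_im_le (w - z)).
  replace (Re (w - z)) with (Re w - Re z)%R in * by (unfold Re; simpl; ring).
  replace (Im (w - z)) with (Im w - Im z)%R in * by (unfold Im; simpl; ring).
  pose proof (Rle_abs (Re w - Re z)). pose proof (Rabs_minus_sym (Re w) (Re z)). pose proof (Rle_abs (Re z - Re w)).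
  pose proof (Rle_abs (Im w - Im z)). pose proof (Rabs_minus_sym (Im w) (Im z)). pose proof (Rle_abs (Im z - Im w)).
  destruct Hw as [[_ [E|E]]|[_ [E|E]]]; rewrite E in *; lra.
Qed.

Lemma div_bound X Xm Y Y0 : 0 <= X -> X <= Xm -> 0 < Y0 -> Y0 <= Y -> (X * / Y <= Xm * / Y0)%R.
Proof.
  intros. apply Rmult_le_compat; auto.
  - left; apply Rinv_0_lt_compat; lra.
  - apply Rinv_le_contravar; auto.
Qed.

Lemma Cpow_nz (x : Complex.C) k : x <> 0 -> x ^ k <> 0.
Proof. intros H; induction k; simpl. { intros E. apply (f_equal fst) in E. simpl in E. lra. } apply Cmult_neq_0; auto. Qed.

Lemma CD_powlin (z : Complex.C) k w : exists l, CD (fun y => (y - z) ^ k) w l.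
Proof.
  induction k as [|k [l IH]].
  - exists 0. apply (CD_ext (fun _ => 1)); [reflexivity| apply CD_const].
  - eexists. apply (CD_mult (fun y => y - z) (fun y => (y - z) ^ k)); [|exact IH].
    apply CD_minus; [apply CD_id| apply CD_const].
Qed.

Lemma kern_EdgeCD h a1 b1 a2 b2 z k : EdgeCD h a1 b1 a2 b2 -> (forall w, OnEdge a1 b1 a2 b2 w -> w <> z) ->
  EdgeCD (fun w => h w * / (w - z) ^ k) a1 b1 a2 b2.
Proof.
  intros Hh Hz w Hw. destruct (Hh w Hw) as [l1 H1]. destruct (CD_powlin z k w) as [l2 H2].
  eexists. apply CD_mult; [exact H1|]. apply CD_inv; [exact H2|]. apply Cpow_nz.
  intros E. apply (Hz w Hw). replace w with (w - z + z) by ring. rewrite E. ring.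
Qed.

Lemma Rect_lin3 f1 f2 f3 c a1 b1 a2 b2 : a1 <= b1 -> a2 <= b2 ->
  EdgeCD f1 a1 b1 a2 b2 -> EdgeCD f2 a1 b1 a2 b2 -> EdgeCD f3 a1 b1 a2 b2 ->
  Rect (fun w => f1 w - f2 w - c * f3 w) a1 b1 a2 b2 = Rect f1 a1 b1 a2 b2 - Rect f2 a1 b1 a2 b2 - c * Rect f3 a1 b1 a2 b2.
Proof.
  intros H1 H2 E1 E2 E3.
  rewrite (Rect_minus (fun w => f1 w - f2 w) (fun w => c * f3 w)); auto.
  - rewrite Rect_minus, Rect_scal; auto.
  - intros w Hw. destruct (E1 w Hw) as [l1 K1]. destruct (E2 w Hw) as [l2 K2]. eexists. apply CD_minus; eauto.
  - intros w Hw. destruct (E3 w Hw) as [l3 K3]. eexists. apply CD_mult; [apply CD_const| eauto].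
Qed.

Definition Kk (k : nat) h a1 b1 a2 b2 (z : Complex.C) := Rect (fun w => h w * / (w - z) ^ k) a1 b1 a2 b2.

Lemma near_far a1 b1 a2 b2 z0 z w : OnEdge a1 b1 a2 b2 w -> Cmod (z - z0) < dmin a1 b1 a2 b2 z0 / 2 ->
  dmin a1 b1 a2 b2 z0 / 2 <= Cmod (w - z).
Proof.
  intros Hw Hz. pose proof (edge_far _ _ _ _ z0 _ Hw).
  pose proof (Cmod_rev_tri (w - z0) (w - z)). replace (w - z0 - (w - z)) with (z - z0) in H0 by ring. lra.
Qed.

Lemma KD1 h a1 b1 a2 b2 z0 : a1 < Re z0 < b1 -> a2 < Im z0 < b2 -> EdgeCD h a1 b1 a2 b2 ->
  CD (Kk 1 h a1 b1 a2 b2) z0 (Kk 2 h a1 b1 a2 b2 z0).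
Proof.
  intros Hx Hy Hh.
  assert (W1 : a1 <= b1) by lra. assert (W2 : a2 <= b2) by lra.
  destruct (edge_bound h a1 b1 a2 b2 W1 W2 Hh) as [M0 HM0].
  set (M := Rmax 0 M0). assert (HM : forall w, OnEdge a1 b1 a2 b2 w -> Cmod (h w) <= M).
  { intros w Hw. eapply Rle_trans; [apply HM0; auto| apply Rmax_r]. }
  assert (M0p : 0 <= M) by apply Rmax_l.
  set (d := dmin a1 b1 a2 b2 z0). assert (Hd : 0 < d) by (apply dmin_pos; auto).
  set (Wd := (b1 - a1 + (b2 - a2))%R).
  apply (CD_of_quad _ _ _ (d / 2) (4 * Wd * (M * / (d / 2 * (d * d))))); [lra| |].
  { apply Rmult_le_pos; [unfold Wd; lra|]. apply Rmult_le_pos; auto. left; apply Rinv_0_lt_compat.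
    apply Rmult_lt_0_compat; [lra| nra]. }
  intros z Hz.
  assert (Fz : forall w, OnEdge a1 b1 a2 b2 w -> d / 2 <= Cmod (w - z)) by (intros; eapply near_far; eauto).
  assert (Fz0 : forall w, OnEdge a1 b1 a2 b2 w -> d <= Cmod (w - z0)) by (intros; apply edge_far; auto).
  assert (Nz : forall w, OnEdge a1 b1 a2 b2 w -> w <> z).
  { intros w Hw E. specialize (Fz w Hw). rewrite E in Fz. replace (z - z) with (RtoC 0) in Fz by ring. rewrite Cmod_0 in Fz. lra. }
  assert (Nz0 : forall w, OnEdge a1 b1 a2 b2 w -> w <> z0).
  { intros w Hw E. specialize (Fz0 w Hw). rewrite E in Fz0. replace (z0 - z0) with (RtoC 0) in Fz0 by ring. rewrite Cmod_0 in Fz0. lra. }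
  unfold Kk. rewrite <- Rect_lin3; auto; try (apply kern_EdgeCD; auto).
  replace (Cmod (z - z0) * Cmod (z - z0))%R with (Cmod (z - z0) * Cmod (z - z0))%R by ring.
  replace (4 * Wd * (M * / (d / 2 * (d * d))) * (Cmod (z - z0) * Cmod (z - z0)))%R with
    (4 * Wd * (M * (Cmod (z - z0) * Cmod (z - z0)) * / (d / 2 * (d * d))))%R by ring.
  apply Rect_bound; auto.
  - intros w Hw. 
    assert (E1 := kern_EdgeCD h _ _ _ _ z 1 Hh Nz w Hw). assert (E2 := kern_EdgeCD h _ _ _ _ z0 1 Hh Nz0 w Hw).
    assert (E3 := kern_EdgeCD h _ _ _ _ z0 2 Hh Nz0 w Hw).
    destruct E1 as [l1 K1], E2 as [l2 K2], E3 as [l3 K3]. eexists.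
    apply CD_minus; [apply CD_minus; eauto|]. apply CD_mult; [apply CD_const| eauto].
  - intros w Hw.
    assert (A1 : w - z <> 0). { intros E. apply (Nz w Hw). replace w with (w - z + z) by ring. rewrite E; ring. }
    assert (A2 : w - z0 <> 0). { intros E. apply (Nz0 w Hw). replace w with (w - z0 + z0) by ring. rewrite E; ring. }
    replace (h w * / (w - z) ^ 1 - h w * / (w - z0) ^ 1 - (z - z0) * (h w * / (w - z0) ^ 2)) with
      (h w * ((z - z0) * (z - z0)) * / ((w - z) * ((w - z0) * (w - z0)))) by (simpl; field; auto).
    rewrite !Cmod_mult, Cmod_inv by (repeat apply Cmult_neq_0; auto). rewrite !Cmod_mult.
    specialize (Fz w Hw). specialize (Fz0 w Hw). specialize (HM w Hw).
    pose proof (Cmod_ge_0 (h w)). pose proof (Cmod_ge_0 (z - z0)).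
    apply div_bound.
    + apply Rmult_le_pos; auto. nra.
    + apply Rmult_le_compat_r; auto. nra.
    + apply Rmult_lt_0_compat; [lra| nra].
    + apply Rmult_le_compat; try lra. nra. apply Rmult_le_compat; lra.
Qed.

Lemma Cmod_minus_le (x y : Complex.C) : Cmod (x - y) <= Cmod x + Cmod y.
Proof. eapply Rle_trans; [apply Cmod_triangle| rewrite Cmod_opp; lra]. Qed.

Lemma Cmod_in_rect a1 b1 a2 b2 w z : a1 <= Re w <= b1 -> a2 <= Im w <= b2 -> a1 <= Re z <= b1 -> a2 <= Im z <= b2 ->
  Cmod (w - z) <= b1 - a1 + (b2 - a2).
Proof.
  intros. eapply Rle_trans; [apply Cmod_le_sum|].
  replace (Re (w - z)) with (Re w - Re z)%R by (unfold Re; simpl; ring).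
  replace (Im (w - z)) with (Im w - Im z)%R by (unfold Im; simpl; ring).
  assert (Rabs (Re w - Re z) <= b1 - a1) by (apply Rabs_le; lra).
  assert (Rabs (Im w - Im z) <= b2 - a2) by (apply Rabs_le; lra). lra.
Qed.

Lemma KD2 h a1 b1 a2 b2 z0 : a1 < Re z0 < b1 -> a2 < Im z0 < b2 -> EdgeCD h a1 b1 a2 b2 ->
  CD (Kk 2 h a1 b1 a2 b2) z0 (2 * Kk 3 h a1 b1 a2 b2 z0).
Proof.
  intros Hx Hy Hh.
  assert (W1 : a1 <= b1) by lra. assert (W2 : a2 <= b2) by lra.
  destruct (edge_bound h a1 b1 a2 b2 W1 W2 Hh) as [M0 HM0].
  set (M := Rmax 0 M0). assert (HM : forall w, OnEdge a1 b1 a2 b2 w -> Cmod (h w) <= M).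
  { intros w Hw. eapply Rle_trans; [apply HM0; auto| apply Rmax_r]. }
  assert (M0p : 0 <= M) by apply Rmax_l.
  set (d := dmin a1 b1 a2 b2 z0). assert (Hd : 0 < d) by (apply dmin_pos; auto).
  set (Wd := (b1 - a1 + (b2 - a2))%R). assert (HWd : 0 <= Wd) by (unfold Wd; lra).
  set (Den := (d / 2 * (d / 2) * (d * d * d))%R).
  assert (HDen : 0 < Den) by (unfold Den; repeat apply Rmult_lt_0_compat; lra).
  apply (CD_of_quad _ _ _ (d / 2) (4 * Wd * (M * (3 * Wd + d) * / Den))); [lra| |].
  { apply Rmult_le_pos; [lra|]. apply Rmult_le_pos; [apply Rmult_le_pos; lra|]. left; apply Rinv_0_lt_compat; auto. }
  intros z Hz.
  assert (Fz : forall w, OnEdge a1 b1 a2 b2 w -> d / 2 <= Cmod (w - z)) by (intros; eapply near_far; eauto).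
  assert (Fz0 : forall w, OnEdge a1 b1 a2 b2 w -> d <= Cmod (w - z0)) by (intros; apply edge_far; auto).
  assert (Nz : forall w, OnEdge a1 b1 a2 b2 w -> w <> z).
  { intros w Hw E. specialize (Fz w Hw). rewrite E in Fz. replace (z - z) with (RtoC 0) in Fz by ring. rewrite Cmod_0 in Fz. lra. }
  assert (Nz0 : forall w, OnEdge a1 b1 a2 b2 w -> w <> z0).
  { intros w Hw E. specialize (Fz0 w Hw). rewrite E in Fz0. replace (z0 - z0) with (RtoC 0) in Fz0 by ring. rewrite Cmod_0 in Fz0. lra. }
  unfold Kk. replace ((z - z0) * (2 * Rect (fun w => h w * / (w - z0) ^ 3) a1 b1 a2 b2)) with
    (((z - z0) * 2) * Rect (fun w => h w * / (w - z0) ^ 3) a1 b1 a2 b2) by ring.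
  rewrite <- Rect_lin3; auto; try (apply kern_EdgeCD; auto).
  replace (4 * Wd * (M * (3 * Wd + d) * / Den) * (Cmod (z - z0) * Cmod (z - z0)))%R with
    (4 * Wd * (M * (Cmod (z - z0) * Cmod (z - z0)) * (3 * Wd + d) * / Den))%R by ring.
  apply Rect_bound; auto.
  - intros w Hw. 
    assert (E1 := kern_EdgeCD h _ _ _ _ z 2 Hh Nz w Hw). assert (E2 := kern_EdgeCD h _ _ _ _ z0 2 Hh Nz0 w Hw).
    assert (E3 := kern_EdgeCD h _ _ _ _ z0 3 Hh Nz0 w Hw).
    destruct E1 as [l1 K1], E2 as [l2 K2], E3 as [l3 K3]. eexists.
    apply CD_minus; [apply CD_minus; eauto|]. apply CD_mult; [apply CD_const| eauto].
  - intros w Hw.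
    assert (A1 : w - z <> 0). { intros E. apply (Nz w Hw). replace w with (w - z + z) by ring. rewrite E; ring. }
    assert (A2 : w - z0 <> 0). { intros E. apply (Nz0 w Hw). replace w with (w - z0 + z0) by ring. rewrite E; ring. }
    replace (h w * / (w - z) ^ 2 - h w * / (w - z0) ^ 2 - (z - z0) * 2 * (h w * / (w - z0) ^ 3)) with
      (h w * ((z - z0) * (z - z0)) * (3 * (w - z0) - 2 * (z - z0)) * / ((w - z) * (w - z) * ((w - z0) * (w - z0) * (w - z0))))
      by (simpl; field; auto).
    rewrite !Cmod_mult, Cmod_inv by (repeat apply Cmult_neq_0; auto). rewrite !Cmod_mult.
    specialize (Fz w Hw). specialize (Fz0 w Hw). specialize (HM w Hw).
    destruct (OnEdge_in _ _ _ _ _ W1 W2 Hw) as [Q1 Q2].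
    assert (Hwz0 : Cmod (w - z0) <= Wd) by (apply Cmod_in_rect; lra).
    assert (H3 : Cmod (3 * (w - z0) - 2 * (z - z0)) <= 3 * Wd + d).
    { eapply Rle_trans; [apply Cmod_minus_le|]. rewrite !Cmod_mult, !Cmod_R, !Rabs_right by lra. lra. }
    pose proof (Cmod_ge_0 (h w)). pose proof (Cmod_ge_0 (z - z0)). pose proof (Cmod_ge_0 (3 * (w - z0) - 2 * (z - z0))).
    apply div_bound; auto.
    + repeat apply Rmult_le_pos; auto.
    + apply Rmult_le_compat; [apply Rmult_le_pos; [auto|apply Rmult_le_pos; auto] | auto | apply Rmult_le_compat_r; [apply Rmult_le_pos; auto|auto] | auto].
    + unfold Den.
      assert (X1: (d/2 * (d/2) <= Cmod (w - z) * Cmod (w - z))%R) by (apply Rmult_le_compat; lra).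
      assert (X2: (d * d <= Cmod (w - z0) * Cmod (w - z0))%R) by (apply Rmult_le_compat; lra).
      assert (X3: (d * d * d <= Cmod (w - z0) * Cmod (w - z0) * Cmod (w - z0))%R) by (apply Rmult_le_compat; try lra; nra).
      apply Rmult_le_compat; try lra; nra.
Qed.

Open Scope R_scope.
Open Scope C_scope.

Lemma RInt_neg f a b : a < b -> (forall t, a <= t <= b -> continuous f t) -> (forall t, a < t < b -> f t < 0) -> RInt f a b < 0.
Proof.
  intros Hab Hc Hn.
  assert (RInt f a b < RInt (fun _ => 0%R) a b).
  { apply RInt_lt; auto. intros; apply continuous_const. }
  rewrite RInt_const in H. unfold scal in H; simpl in H. unfold mult in H; simpl in H. lra.
Qed.

Lemma inv_cont_line (p : R -> Complex.C) z t : (forall t s, Cmod (p t - p s) = Rabs (t - s)) -> p t <> z ->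
  continuous (fun t => Re (/ (p t - z))) t /\ continuous (fun t => Im (/ (p t - z))) t.
Proof.
  intros Hp Hz. eapply (cont_line (fun w => / (w - z)) p t _ Hp).
  apply (CD_inv (fun w => w - z)). apply CD_minus; [apply CD_id|apply CD_const].
  intros E. apply Hz. replace (p t) with (p t - z + z) by ring. rewrite E; ring.
Qed.

Lemma den_pos_r a b : b <> 0 -> 0 < a * (a * 1) + b * (b * 1).
Proof. intros H. assert (0 < b * b) by (apply Rsqr_pos_lt; auto). nra. Qed.
Lemma den_pos_l a b : a <> 0 -> 0 < a * (a * 1) + b * (b * 1).
Proof. intros H. assert (0 < a * a) by (apply Rsqr_pos_lt; auto). nra. Qed.

Lemma neg_div a b : 0 < a -> 0 < b -> - a / b < 0.
Proof. intros. assert (0 < a / b) by (apply Rdiv_lt_0_compat; auto).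
  replace (- a / b)%R with (- (a / b))%R by (unfold Rdiv; ring). lra. Qed.

Lemma Im_rect_comb (A B Cc D : Complex.C) : Im (A + Ci * B - Cc - Ci * D) = (Im A + Re B - Im Cc - Re D)%R.
Proof. unfold Re, Im; simpl; ring. Qed.

Lemma center_nz x0 y0 s : 0 < s -> Rect (fun w => / (w - (x0, y0))) (x0 - s) (x0 + s) (y0 - s) (y0 + s) <> 0.
Proof.
  intros Hs E. set (z0 := (x0, y0) : Complex.C) in *.
  assert (Hab : x0 - s < x0 + s) by lra. assert (Hab2 : y0 - s < y0 + s) by lra.
  assert (I1 : 0 < RInt (fun t => Im (/ ((t, (y0 - s)%R) - z0))) (x0 - s) (x0 + s)).
  { apply RInt_gt_0; auto.
    - intros t _. unfold z0, Cinv; simpl. apply Rdiv_lt_0_compat; [lra| apply den_pos_r; lra].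
    - intros t _. apply (inv_cont_line (fun t => (t, (y0 - s)%R)) z0 t). intros; apply Cmod_h.
      unfold z0; apply neq_pt; simpl; right; lra. }
  assert (I2 : 0 < RInt (fun t => Re (/ (((x0 + s)%R, t) - z0))) (y0 - s) (y0 + s)).
  { apply RInt_gt_0; auto.
    - intros t _. unfold z0, Cinv; simpl. apply Rdiv_lt_0_compat; [lra| apply den_pos_l; lra].
    - intros t _. apply (inv_cont_line (fun t => ((x0 + s)%R, t)) z0 t). intros; apply Cmod_v.
      unfold z0; apply neq_pt; simpl; left; lra. }
  assert (I3 : RInt (fun t => Im (/ ((t, (y0 + s)%R) - z0))) (x0 - s) (x0 + s) < 0).
  { apply RInt_neg; auto.
    - intros t _. apply (inv_cont_line (fun t => (t, (y0 + s)%R)) z0 t). intros; apply Cmod_h.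
      unfold z0; apply neq_pt; simpl; right; lra.
    - intros t _. unfold z0, Cinv; simpl. apply neg_div; [lra| apply den_pos_r; lra]. }
  assert (I4 : RInt (fun t => Re (/ (((x0 - s)%R, t) - z0))) (y0 - s) (y0 + s) < 0).
  { apply RInt_neg; auto.
    - intros t _. apply (inv_cont_line (fun t => ((x0 - s)%R, t)) z0 t). intros; apply Cmod_v.
      unfold z0; apply neq_pt; simpl; left; lra.
    - intros t _. unfold z0, Cinv; simpl. replace (x0 - s + - x0)%R with (- s)%R by ring. apply neg_div; [lra| apply den_pos_l; lra]. }
  apply (f_equal Im) in E. unfold Rect in E. rewrite Im_rect_comb in E. unfold Cint in E. cbn [fst snd Re Im] in E.
  unfold Re, Im in *. change (snd (RtoC 0)) with 0%R in E. lra.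
Qed.

Open Scope R_scope.
Open Scope C_scope.

Lemma ball_C (z y : Complex.C) (e : R) : Rabs (Re y - Re z) < e -> Rabs (Im y - Im z) < e -> ball z e y.
Proof. intros H1 H2. split; [exact H1| exact H2]. Qed.

Theorem REG (f f' : Complex.C -> Complex.C) (Om : Complex.C -> Prop) :
  open Om -> (forall z, Om z -> CD f z (f' z)) -> forall z0, Om z0 -> exists l, CD f' z0 l.
Proof.
  intros HO Hf z0 Hz0.
  destruct (HO z0 Hz0) as [e He].
  destruct z0 as [x0 y0].
  set (s := (e / 2)%R). assert (Hs : 0 < s) by (unfold s; destruct e; simpl; lra).
  assert (Hse : s < e) by (unfold s; destruct e; simpl; lra).
  set (a1 := (x0 - s)%R). set (b1 := (x0 + s)%R). set (a2 := (y0 - s)%R). set (b2 := (y0 + s)%R).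
  assert (W1 : a1 <= b1) by (unfold a1, b1; lra). assert (W2 : a2 <= b2) by (unfold a2, b2; lra).
  assert (HG : Good f a1 b1 a2 b2).
  { intros w Hw1 Hw2. exists (f' w). apply Hf. apply He. apply ball_C; simpl; apply Rabs_lt_between'; unfold a1, b1, a2, b2 in *; lra. }
  set (one := fun _ : Complex.C => RtoC 1).
  assert (EO : EdgeCD one a1 b1 a2 b2). { intros w _. exists 0. apply CD_const. }
  assert (EF : EdgeCD f a1 b1 a2 b2) by (apply Good_Edge; auto).
  set (c := Kk 1 one a1 b1 a2 b2). set (I := Kk 1 f a1 b1 a2 b2).
  assert (Cauchy' : forall z, a1 < Re z < b1 -> a2 < Im z < b2 -> f z * c z = I z).
  { intros [x y] Hx Hy. simpl in Hx, Hy.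
    unfold c, I, Kk. rewrite (Rect_ext (fun w => one w * / (w - (x, y)) ^ 1) (fun w => / (w - (x, y)))) by
      (auto; intros; unfold one; simpl; rewrite Cmult_1_r, Cmult_1_l; reflexivity).
    rewrite (Rect_ext (fun w => f w * / (w - (x, y)) ^ 1) (fun w => f w * / (w - (x, y)))) by
      (auto; intros; simpl; rewrite Cmult_1_r; reflexivity).
    symmetry. apply Cauchy; auto. }
  assert (Hc0 : c (x0, y0) <> 0).
  { unfold c, Kk. rewrite (Rect_ext (fun w => one w * / (w - (x0, y0)) ^ 1) (fun w => / (w - (x0, y0)))) by
      (auto; intros; unfold one; simpl; rewrite Cmult_1_r, Cmult_1_l; reflexivity).
    apply center_nz; auto. }
  assert (Int0 : a1 < Re (x0, y0) < b1 /\ a2 < Im (x0, y0) < b2) by (simpl; unfold a1, b1, a2, b2; lra).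
  assert (Hcc : CD c (x0, y0) (Kk 2 one a1 b1 a2 b2 (x0, y0))) by (apply KD1; tauto).
  assert (Hcp : (0 < Cmod (c (x0, y0)))%R) by exact (proj1 (Cmod_gt_0 _) Hc0).
  destruct (CD_cont _ _ _ Hcc _ Hcp) as [dc [Hdc Hdc2]].
  set (rho := Rmin s dc). assert (Hrho : 0 < rho) by (apply Rmin_pos; auto).
  assert (Nin : forall z, (Cmod (z - (x0, y0)) < rho)%R -> (a1 < Re z < b1 /\ a2 < Im z < b2) /\ c z <> 0).
  { intros z Hz. assert (Hz1 : (Cmod (z - (x0, y0)) < s)%R) by (eapply Rlt_le_trans; [exact Hz| apply Rmin_l]).
    assert (Hz2 : (Cmod (z - (x0, y0)) < dc)%R) by (eapply Rlt_le_trans; [exact Hz| apply Rmin_r]).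
    pose proof (Cmod_re_le (z - (x0, y0))). pose proof (Cmod_im_le (z - (x0, y0))).
    replace (Re (z - (x0, y0))) with (Re z - x0)%R in * by (unfold Re; simpl; ring).
    replace (Im (z - (x0, y0))) with (Im z - y0)%R in * by (unfold Im; simpl; ring).
    split.
    - assert (R1 : (Rabs (Re z - x0) < s)%R) by lra. assert (R2 : (Rabs (Im z - y0) < s)%R) by lra.
      apply Rabs_lt_between' in R1. apply Rabs_lt_between' in R2. unfold a1, b1, a2, b2. lra.
    - intros E. specialize (Hdc2 z Hz2). rewrite E in Hdc2.
      replace (0 - c (x0, y0)) with (- c (x0, y0)) in Hdc2 by ring. rewrite Cmod_opp in Hdc2. lra. }
  set (Gd := fun z => Kk 2 f a1 b1 a2 b2 z * / c z + I z * (- Kk 2 one a1 b1 a2 b2 z * / (c z * c z))).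
  assert (HQ : forall z, (Cmod (z - (x0, y0)) < rho)%R -> CD (fun y => I y * / c y) z (Gd z)).
  { intros z Hz. destruct (Nin z Hz) as [[Hx Hy] Hcz].
    eapply CD_eq_l; [|apply CD_mult; [apply KD1; auto| apply CD_inv; [apply KD1; auto| auto]]].
    unfold Gd. field. auto. }
  assert (Eq : forall z, (Cmod (z - (x0, y0)) < rho)%R -> f' z = Gd z).
  { intros z Hz. destruct (Nin z Hz) as [[Hx Hy] Hcz].
    apply (CD_unique (fun y => I y * / c y) z); [|apply HQ; auto].
    apply (CD_ext_loc f _ z _ (rho - Cmod (z - (x0, y0)))); [lra| |].
    - intros y Hyy. assert (Hy2 : (Cmod (y - (x0, y0)) < rho)%R).
      { replace (y - (x0, y0)) with ((y - z) + (z - (x0, y0))) by ring.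
        eapply Rle_lt_trans; [apply Cmod_triangle| lra]. }
      destruct (Nin y Hy2) as [[Hx2 Hy3] Hcy].
      rewrite <- (Cauchy' y Hx2 Hy3). field. auto.
    - apply Hf. apply He. apply ball_C; apply Rabs_lt_between'; destruct (Nin z Hz) as [[A B] _]; simpl;
      unfold a1, b1, a2, b2 in *; simpl in *; lra. }
  destruct Int0 as [Ix Iy].
  eexists. apply (CD_ext_loc Gd f' (x0, y0) _ rho Hrho).
  { intros y Hy. symmetry. apply Eq. auto. }
  unfold Gd.
  apply CD_plus.
  - apply CD_mult; [apply KD2; auto| apply CD_inv; [apply KD1; auto| auto]].
  - apply CD_mult; [apply KD1; auto|]. apply CD_mult; [apply CD_opp; apply KD2; auto|].
    apply CD_inv; [apply CD_mult; apply KD1; auto| apply Cmult_neq_0; auto].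
Qed.

Open Scope R_scope.

Lemma rd_mult (f g : R -> R) x a b : is_derive f x a -> is_derive g x b -> is_derive (fun t => f t * g t) x (a * g x + f x * b).
Proof. intros H1 H2. exact (@is_derive_mult R_AbsRing f g x a b H1 H2 Rmult_comm). Qed.
Lemma rd_minus (f g : R -> R) x a b : is_derive f x a -> is_derive g x b -> is_derive (fun t => f t - g t) x (a - b).
Proof. intros H1 H2. exact (@is_derive_minus R_AbsRing R_NormedModule f g x a b H1 H2). Qed.
Lemma rd_plus (f g : R -> R) x a b : is_derive f x a -> is_derive g x b -> is_derive (fun t => f t + g t) x (a + b).
Proof. intros H1 H2. exact (@is_derive_plus R_AbsRing R_NormedModule f g x a b H1 H2). Qed.
Lemma rd_const (c : R) x : is_derive (fun _ => c) x 0.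
Proof. exact (@is_derive_const R_AbsRing R_NormedModule c x). Qed.
Lemma rd_comp (f g : R -> R) x a b : is_derive g x a -> is_derive f (g x) b -> is_derive (fun t => f (g t)) x (a * b).
Proof. intros H1 H2. exact (@is_derive_comp R_AbsRing R_NormedModule f g x b a H2 H1). Qed.
Lemma rd_eq (f : R -> R) x a b : a = b -> is_derive f x a -> is_derive f x b.
Proof. intros ->; auto. Qed.
Lemma rd_ext (f g : R -> R) x a : (forall t, f t = g t) -> is_derive f x a -> is_derive g x a.
Proof. intros H1 H2. eapply is_derive_ext; eauto. Qed.

Lemma rd_of_bound (g : R -> R) x L :
  (forall eps, 0 < eps -> exists del, 0 < del /\ forall t, Rabs (t - x) < del -> Rabs (g t - g x - (t - x) * L) <= eps * Rabs (t - x)) ->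
  is_derive g x L.
Proof.
  intros H. apply is_derive_Reals. intros eps Heps.
  destruct (H (eps / 2) ltac:(lra)) as [d [Hd Hd2]].
  exists (mkposreal d Hd). intros h Hh Hhd. simpl in Hhd.
  specialize (Hd2 (x + h) ltac:(replace (x + h - x) with h by ring; auto)).
  replace (x + h - x) with h in Hd2 by ring.
  assert (Hp : 0 < Rabs h) by (apply Rabs_pos_lt; auto).
  replace ((g (x + h) - g x) / h - L) with ((g (x + h) - g x - h * L) / h) by (field; auto).
  unfold Rdiv. rewrite Rabs_mult, Rabs_inv.
  apply Rle_lt_trans with (eps / 2 * Rabs h * / Rabs h).
  - apply Rmult_le_compat_r; auto. left; apply Rinv_0_lt_compat; auto.
  - field_simplify; lra.
Qed.

Open Scope C_scope.

Lemma line_deriv H (p : R -> Complex.C) (v : Complex.C) x l :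
  (forall t s, p t - p s = RtoC (t - s) * v) -> Cmod v = 1%R -> CD H (p x) l ->
  is_derive (fun t => Re (H (p t))) x (Re (v * l)) /\ is_derive (fun t => Im (H (p t))) x (Im (v * l)).
Proof.
  intros Hp Hv HD. apply CD_CDe in HD.
  split; apply rd_of_bound; intros eps Heps; destruct (HD eps Heps) as [d [Hd Hd2]];
  exists d; split; auto; intros t Ht;
  (assert (Ct : Cmod (p t - p x) = Rabs (t - x)) by (rewrite Hp, Cmod_mult, Hv, Cmod_R; ring));
  specialize (Hd2 (p t) ltac:(rewrite Ct; auto)); rewrite Ct in Hd2;
  eapply Rle_trans; try exact Hd2.
  - replace (Re (H (p t)) - Re (H (p x)) - (t - x) * Re (v * l))%R with (Re (H (p t) - H (p x) - (p t - p x) * l)).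
    apply Cmod_re_le. rewrite Hp. unfold Re; simpl; ring.
  - replace (Im (H (p t)) - Im (H (p x)) - (t - x) * Im (v * l))%R with (Im (H (p t) - H (p x) - (p t - p x) * l)).
    apply Cmod_im_le. rewrite Hp. unfold Im; simpl; ring.
Qed.

Definition PD (H : Complex.C -> Complex.C) (z hx hy : Complex.C) : Prop :=
  is_derive (fun t => Re (H (t, Im z))) (Re z) (Re hx) /\ is_derive (fun t => Im (H (t, Im z))) (Re z) (Im hx) /\
  is_derive (fun t => Re (H (Re z, t))) (Im z) (Re hy) /\ is_derive (fun t => Im (H (Re z, t))) (Im z) (Im hy).

Lemma PD_of_CD H z l : CD H z l -> PD H z l (Ci * l).
Proof.
  intros HD. destruct z as [x y].
  assert (A := line_deriv H (fun t => (t, y)) 1 x l ltac:(intros; apply injective_projections; simpl; ring) Cmod_1 HD).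
  assert (B := line_deriv H (fun t => (x, t)) Ci y l ltac:(intros; apply injective_projections; simpl; ring) Cmod_Ci HD).
  cbv beta in A, B. rewrite Cmult_1_l in A. unfold PD; simpl. tauto.
Qed.

Lemma PD_ext H K z hx hy : (forall q, H q = K q) -> PD H z hx hy -> PD K z hx hy.
Proof. intros E (A1 & A2 & A3 & A4). split; [|split; [|split]]; eapply rd_ext; eauto; intros; simpl; rewrite E; auto. Qed.

Lemma PD_mult H K z hx hy kx ky : PD H z hx hy -> PD K z kx ky ->
  PD (fun q => H q * K q) z (hx * K z + H z * kx) (hy * K z + H z * ky).
Proof.
  destruct z as [x y]. intros (A1 & A2 & A3 & A4) (B1 & B2 & B3 & B4). simpl in *.
  split; [|split; [|split]].
  - eapply rd_ext; [|eapply rd_eq; [|exact (rd_minus _ _ _ _ _ (rd_mult _ _ _ _ _ A1 B1) (rd_mult _ _ _ _ _ A2 B2))]].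
    + intros; unfold Re, Im; simpl; ring.
    + unfold Re, Im; simpl; ring.
  - eapply rd_ext; [|eapply rd_eq; [|exact (rd_plus _ _ _ _ _ (rd_mult _ _ _ _ _ A1 B2) (rd_mult _ _ _ _ _ A2 B1))]].
    + intros; unfold Re, Im; simpl; ring.
    + unfold Re, Im; simpl; ring.
  - eapply rd_ext; [|eapply rd_eq; [|exact (rd_minus _ _ _ _ _ (rd_mult _ _ _ _ _ A3 B3) (rd_mult _ _ _ _ _ A4 B4))]].
    + intros; unfold Re, Im; simpl; ring.
    + unfold Re, Im; simpl; ring.
  - eapply rd_ext; [|eapply rd_eq; [|exact (rd_plus _ _ _ _ _ (rd_mult _ _ _ _ _ A3 B4) (rd_mult _ _ _ _ _ A4 B3))]].
    + intros; unfold Re, Im; simpl; ring.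
    + unfold Re, Im; simpl; ring.
Qed.

Lemma PD_real (g : Complex.C -> R) z gx gy :
  is_derive (fun t => g (t, Im z)) (Re z) gx -> is_derive (fun t => g (Re z, t)) (Im z) gy ->
  PD (fun q => RtoC (g q)) z (RtoC gx) (RtoC gy).
Proof.
  intros H1 H2. split; [|split; [|split]]; simpl; auto; apply rd_const.
Qed.

Lemma PD_const (c : Complex.C) z : PD (fun _ => c) z 0 0.
Proof. split; [|split; [|split]]; simpl; apply rd_const. Qed.

Definition dxR (f : Complex.C -> Complex.C) (z : Complex.C) : Complex.C :=
  (Derive (fun t => Re (f (t, Im z))) (Re z), Derive (fun t => Im (f (t, Im z))) (Re z)).
Definition dyR (f : Complex.C -> Complex.C) (z : Complex.C) : Complex.C :=
  (Derive (fun t => Re (f (Re z, t))) (Im z), Derive (fun t => Im (f (Re z, t))) (Im z)).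

Lemma PD_dx H z hx hy : PD H z hx hy -> dxR H z = hx.
Proof.
  intros (A1 & A2 & _ & _). unfold dxR. apply injective_projections; simpl; apply is_derive_unique; auto.
Qed.
Lemma PD_dy H z hx hy : PD H z hx hy -> dyR H z = hy.
Proof.
  intros (_ & _ & A1 & A2). unfold dyR. apply injective_projections; simpl; apply is_derive_unique; auto.
Qed.

Open Scope R_scope.
Open Scope C_scope.

Lemma Ci2 : Ci * Ci = - (1).
Proof. apply injective_projections; simpl; ring. Qed.
Lemma Ci_nz : Ci <> 0.
Proof. intros E. apply (f_equal snd) in E. simpl in E. lra. Qed.
Lemma RtoC_nz (r : R) : r <> 0%R -> RtoC r <> 0.
Proof. intros H E. apply H. apply (f_equal fst) in E. exact E. Qed.
Lemma conj_R (r : R) : Cconj (RtoC r) = RtoC r.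
Proof. apply injective_projections; simpl; ring. Qed.
Lemma conj_Ci : Cconj Ci = - Ci.
Proof. apply injective_projections; simpl; ring. Qed.
Lemma RtoC_invd (r : R) : r <> 0%R -> RtoC (/ r) = / RtoC r.
Proof. intros H. apply injective_projections; simpl; field; auto. Qed.
Lemma RtoC_dinv (a b : R) : b <> 0%R -> RtoC (- a / b ^ 2) = - RtoC a / (RtoC b * RtoC b).
Proof. intros H. apply injective_projections; simpl; field; auto. Qed.

Lemma den_nz (W cW : Complex.C) : W <> 0 -> cW <> 0 -> W * (cW * - Ci) - cW * (W * Ci) <> 0.
Proof.
  intros H1 H2. replace (W * (cW * - Ci) - cW * (W * Ci)) with ((0, (-2)%R) * (W * cW)) by (apply injective_projections; simpl; ring).
  apply Cmult_neq_0; [|apply Cmult_neq_0; auto]. intros E. apply (f_equal snd) in E. simpl in E. lra.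
Qed.

Definition HP (f : Complex.C -> Complex.C) (z : Complex.C) : Prop :=
    ex_derive (fun t => Re (f (t, Im z))) (Re z) /\
    ex_derive (fun t => Im (f (t, Im z))) (Re z) /\
    ex_derive (fun t => Re (f (Re z, t))) (Im z) /\
    ex_derive (fun t => Im (f (Re z, t))) (Im z).

Lemma PD_HP H z hx hy : PD H z hx hy -> HP H z.
Proof. intros (A1 & A2 & A3 & A4). repeat split; eexists; eauto. Qed.

Lemma CHAR (Fm Gm Wf : Complex.C -> Complex.C) (gf : Complex.C -> R) z k gx gy :
  (forall q, Fm q = Wf q * RtoC (gf q)) -> (forall q, Gm q = Wf q * (Ci * RtoC (/ gf q))) ->
  CD Wf z k -> Wf z <> 0 -> gf z <> 0%R ->
  is_derive (fun t => gf (t, Im z)) (Re z) gx -> is_derive (fun t => gf (Re z, t)) (Im z) gy ->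
  HP Fm z /\ HP Gm z /\ char_a Fm Gm z = 0 /\
  char_b Fm Gm z = Wf z / Cconj (Wf z) * ((RtoC gx + Ci * RtoC gy) / (2 * RtoC (gf z))) /\
  char_B Fm Gm z = Wf z / Cconj (Wf z) * ((RtoC gx - Ci * RtoC gy) / (2 * RtoC (gf z))) /\
  (0 < Im (Cconj (Fm z) * Gm z))%R.
Proof.
  intros EF EG HW HWz Hg Hgx Hgy.
  assert (PW := PD_of_CD _ _ _ HW).
  assert (PG := PD_real gf z gx gy Hgx Hgy).
  assert (PF := PD_ext _ _ _ _ _ (fun q => eq_sym (EF q)) (PD_mult _ _ _ _ _ _ _ PW PG)).
  assert (Hix : is_derive (fun t => (/ gf (t, Im z))%R) (Re z) (- gx / gf (Re z, Im z) ^ 2)%R).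
  { apply is_derive_inv; auto. destruct z; auto. }
  assert (Hiy : is_derive (fun t => (/ gf (Re z, t))%R) (Im z) (- gy / gf (Re z, Im z) ^ 2)%R).
  { apply is_derive_inv; auto. destruct z; auto. }
  assert (PI := PD_real (fun q => / gf q)%R z _ _ Hix Hiy).
  assert (PCI := PD_mult _ _ _ _ _ _ _ (PD_const Ci z) PI).
  assert (PGm := PD_ext _ _ _ _ _ (fun q => eq_sym (EG q)) (PD_mult _ _ _ _ _ _ _ PW PCI)).
  assert (Ez : (Re z, Im z) = z) by (destruct z; reflexivity). rewrite Ez in *.
  split; [eapply PD_HP; eauto|]. split; [eapply PD_HP; eauto|].
  assert (DXF := PD_dx _ _ _ _ PF). assert (DYF := PD_dy _ _ _ _ PF).
  assert (DXG := PD_dx _ _ _ _ PGm). assert (DYG := PD_dy _ _ _ _ PGm).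
  change (dxR Fm z) with (dx Fm z) in DXF. change (dyR Fm z) with (dy Fm z) in DYF.
  change (dxR Gm z) with (dx Gm z) in DXG. change (dyR Gm z) with (dy Gm z) in DYG.
  unfold char_a, char_b, char_B, dzbar, dz.
  rewrite DXF, DYF, DXG, DYG, EF, EG. cbv beta.
  rewrite RtoC_invd, !RtoC_dinv by auto.
  set (W := Wf z) in *. set (g := RtoC (gf z)) in *. set (cW := Cconj W).
  assert (Hg' : g <> 0) by (apply RtoC_nz; auto).
  assert (HcW : cW <> 0). { unfold cW. intros E. apply HWz. rewrite <- (Cconj_conj W), E. apply injective_projections; simpl; ring. }
  assert (CF : Cconj (W * g) = cW * g) by (rewrite Cmult_conj; unfold g; rewrite conj_R; reflexivity).
  assert (CG : Cconj (W * (Ci * / g)) = cW * (- Ci * / g)).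
  { rewrite !Cmult_conj, Cinv_conj by auto. unfold g; rewrite conj_R, conj_Ci. reflexivity. }
  rewrite CF, CG.
  set (gX := RtoC gx). set (gY := RtoC gy).
  assert (D1 : (k * g + W * gX + Ci * (Ci * k * g + W * gY)) / 2 = W * ((gX + Ci * gY) / 2)).
  { replace (k * g + W * gX + Ci * (Ci * k * g + W * gY)) with ((1 + Ci * Ci) * k * g + W * (gX + Ci * gY)) by ring.
    rewrite Ci2. field; auto. }
  assert (D2 : (k * g + W * gX - Ci * (Ci * k * g + W * gY)) / 2 = k * g + W * ((gX - Ci * gY) / 2)).
  { replace (k * g + W * gX - Ci * (Ci * k * g + W * gY)) with ((1 - Ci * Ci) * k * g + W * (gX - Ci * gY)) by ring.
    rewrite Ci2. field; auto. }
  set (igX := - gX / (g * g)). set (igY := - gY / (g * g)).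
  assert (D3 : (k * (Ci * / g) + W * (0 * / g + Ci * igX) + Ci * (Ci * k * (Ci * / g) + W * (0 * / g + Ci * igY))) / 2
      = W * Ci * ((igX + Ci * igY) / 2)).
  { replace (k * (Ci * / g) + W * (0 * / g + Ci * igX) + Ci * (Ci * k * (Ci * / g) + W * (0 * / g + Ci * igY)))
      with ((1 + Ci * Ci) * (k * (Ci * / g)) + W * Ci * (igX + Ci * igY)) by ring.
    rewrite Ci2. field; auto. }
  assert (D4 : (k * (Ci * / g) + W * (0 * / g + Ci * igX) - Ci * (Ci * k * (Ci * / g) + W * (0 * / g + Ci * igY))) / 2
      = k * (Ci * / g) + W * Ci * ((igX - Ci * igY) / 2)).
  { replace (k * (Ci * / g) + W * (0 * / g + Ci * igX) - Ci * (Ci * k * (Ci * / g) + W * (0 * / g + Ci * igY)))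
      with ((1 - Ci * Ci) * (k * (Ci * / g)) + W * Ci * (igX - Ci * igY)) by ring.
    rewrite Ci2. field; auto. }
  rewrite D1, D2, D3, D4. unfold igX, igY.
  pose proof Ci_nz.
  split; [|split; [|split]].
  - field. repeat split; auto. apply den_nz; auto.
  - field. repeat split; auto. apply den_nz; auto.
  - field. repeat split; auto. apply den_nz; auto.
  - replace (cW * g * (W * (Ci * / g))) with (Ci * (W * cW)) by (field; auto).
    unfold cW. rewrite <- Cmod2_conj. simpl. 
    assert (0 < Cmod W)%R by exact (proj1 (Cmod_gt_0 _) HWz). nra.
Qed.

Open Scope R_scope.
Open Scope C_scope.

Lemma pow_n_Cpow (x : Complex.C) n : @pow_n C_Ring x n = x ^ n.
Proof. induction n as [|n IH]; [reflexivity| simpl; try rewrite IH; reflexivity]. Qed.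

Lemma Czpow_nat x n : Czpow x (Z.of_nat n) = x ^ n.
Proof.
  destruct n. reflexivity. simpl. rewrite SuccNat2Pos.id_succ. apply pow_n_Cpow.
Qed.

Lemma Czpow_negnat x n : Czpow x (- Z.of_nat n)%Z = / x ^ n.
Proof.
  destruct n. simpl. apply injective_projections; simpl; field.
  simpl. rewrite SuccNat2Pos.id_succ, pow_n_Cpow. reflexivity.
Qed.

Lemma Z_cases (m : Z) : (exists n, m = Z.of_nat n) \/ (exists n, m = (- Z.of_nat (S n))%Z).
Proof.
  destruct (Z_le_gt_dec 0 m).
  - left. exists (Z.to_nat m). rewrite Z2Nat.id; auto.
  - right. exists (Z.to_nat (- m - 1)). rewrite Nat2Z.inj_succ, Z2Nat.id; lia.
Qed.

Lemma Cinv_nz (y : Complex.C) : y <> 0 -> / y <> 0.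
Proof.
  intros H E. pose proof (Cinv_r y H) as H2. rewrite E, Cmult_0_r in H2.
  apply (f_equal fst) in H2. simpl in H2. lra.
Qed.

Lemma Czpow_nz (x : Complex.C) m : x <> 0 -> Czpow x m <> 0.
Proof.
  intros H. destruct (Z_cases m) as [[n ->]|[n ->]].
  - rewrite Czpow_nat. apply Cpow_nz; auto.
  - rewrite Czpow_negnat. apply Cinv_nz, Cpow_nz; auto.
Qed.

Lemma Czpow_succ (x : Complex.C) m : x <> 0 -> Czpow x (m + 1) = x * Czpow x m.
Proof.
  intros H. destruct (Z_cases m) as [[n ->]|[n ->]].
  - replace (Z.of_nat n + 1)%Z with (Z.of_nat (S n)) by lia. rewrite !Czpow_nat. reflexivity.
  - replace (- Z.of_nat (S n) + 1)%Z with (- Z.of_nat n)%Z by lia. rewrite !Czpow_negnat.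
    pose proof (Cpow_nz x n H). simpl. field. auto.
Qed.

Lemma CD_Cpow_comp (w : Complex.C -> Complex.C) z k n : CD w z k -> exists l, CD (fun q => w q ^ n) z l.
Proof.
  intros Hw. induction n as [|n [l IH]].
  - exists 0. apply (CD_ext (fun _ => 1)); [reflexivity| apply CD_const].
  - eexists. apply (CD_mult w (fun q => w q ^ n)); eauto.
Qed.

Lemma CD_Czpow (w : Complex.C -> Complex.C) z k m : CD w z k -> w z <> 0 -> exists l, CD (fun q => Czpow (w q) m) z l.
Proof.
  intros Hw Hz. destruct (Z_cases m) as [[n ->]|[n ->]].
  - destruct (CD_Cpow_comp w z k n Hw) as [l Hl]. exists l.
    eapply CD_ext; [|exact Hl]. intros; rewrite Czpow_nat; auto.
  - destruct (CD_Cpow_comp w z k (S n) Hw) as [l Hl]. eexists.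
    eapply CD_ext; [|apply CD_inv; [exact Hl| apply Cpow_nz; auto]]. intros; rewrite Czpow_negnat; auto.
Qed.

Open Scope R_scope.
Open Scope C_scope.

Lemma KEY_even (a b P Q Uz Vz gEx gEy gOx gOy : R) : Uz <> 0%R ->
  gEx = (a * P * Vz + Uz * (b * Q))%R -> gEy = (- b * P * Vz + Uz * (a * Q))%R ->
  gOx = (b * Q * / Uz + Vz * (- (a * P) / Uz ^ 2))%R -> gOy = (a * Q * / Uz + Vz * (- (- b * P) / Uz ^ 2))%R ->
  (a, b) * (RtoC gOx + Ci * RtoC gOy) * RtoC (Uz * Vz) = - (RtoC gEx - Ci * RtoC gEy) * RtoC (Vz * / Uz) * Cconj (a, b).
Proof.
  intros HU -> -> -> ->. apply injective_projections; simpl; field; auto.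
Qed.

Lemma KEY_odd (a b P Q Uz Vz gEx gEy gOx gOy : R) : Uz <> 0%R ->
  gEx = (a * P * Vz + Uz * (b * Q))%R -> gEy = (- b * P * Vz + Uz * (a * Q))%R ->
  gOx = (b * Q * / Uz + Vz * (- (a * P) / Uz ^ 2))%R -> gOy = (a * Q * / Uz + Vz * (- (- b * P) / Uz ^ 2))%R ->
  (a, b) * (RtoC gEx + Ci * RtoC gEy) * RtoC (Vz * / Uz) = - (RtoC gOx - Ci * RtoC gOy) * RtoC (Uz * Vz) * Cconj (a, b).
Proof.
  intros HU -> -> -> ->. apply injective_projections; simpl; field; auto.
Qed.
Lemma EFodd (c : Complex.C) (Uq Vq : R) : Uq <> 0%R -> c / RtoC (Uq ^ 2) * RtoC (Uq * Vq) = c * RtoC (Vq * / Uq).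
Proof. intros H. apply injective_projections; simpl; field; auto. Qed.
Lemma EGeven (c : Complex.C) (Uq Vq : R) : Uq <> 0%R -> Vq <> 0%R -> c * (Ci / RtoC (Uq * Vq)) = c * (Ci * RtoC (/ (Uq * Vq))).
Proof. intros H1 H2. apply injective_projections; simpl; field; auto. Qed.
Lemma EGodd (c : Complex.C) (Uq Vq : R) : Uq <> 0%R -> Vq <> 0%R -> c * RtoC (Uq ^ 2) * (Ci / RtoC (Uq * Vq)) = c * (Ci * RtoC (/ (Vq * / Uq))).
Proof. intros H1 H2. apply injective_projections; simpl; field; auto. Qed.

Lemma Re_Ci_mult (l : Complex.C) : Re (Ci * l) = (- Im l)%R.
Proof. unfold Re, Im; simpl; ring. Qed.
Lemma Im_Ci_mult (l : Complex.C) : Im (Ci * l) = Re l.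
Proof. unfold Re, Im; simpl; ring. Qed.

Lemma KEY_even_l (l : Complex.C) (P Q Uz Vz gEx gEy gOx gOy : R) : Uz <> 0%R ->
  gEx = (Re l * P * Vz + Uz * (Im l * Q))%R -> gEy = (- Im l * P * Vz + Uz * (Re l * Q))%R ->
  gOx = (Im l * Q * / Uz + Vz * (- (Re l * P) / Uz ^ 2))%R -> gOy = (Re l * Q * / Uz + Vz * (- (- Im l * P) / Uz ^ 2))%R ->
  l * (RtoC gOx + Ci * RtoC gOy) * RtoC (Uz * Vz) = - (RtoC gEx - Ci * RtoC gEy) * RtoC (Vz * / Uz) * Cconj l.
Proof. destruct l as [a b]. apply KEY_even. Qed.

Lemma KEY_odd_l (l : Complex.C) (P Q Uz Vz gEx gEy gOx gOy : R) : Uz <> 0%R ->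
  gEx = (Re l * P * Vz + Uz * (Im l * Q))%R -> gEy = (- Im l * P * Vz + Uz * (Re l * Q))%R ->
  gOx = (Im l * Q * / Uz + Vz * (- (Re l * P) / Uz ^ 2))%R -> gOy = (Re l * Q * / Uz + Vz * (- (- Im l * P) / Uz ^ 2))%R ->
  l * (RtoC gEx + Ci * RtoC gEy) * RtoC (Vz * / Uz) = - (RtoC gOx - Ci * RtoC gOy) * RtoC (Uz * Vz) * Cconj l.
Proof. destruct l as [a b]. apply KEY_odd. Qed.


Open Scope R_scope.
Open Scope C_scope.

Lemma conj_nz (x : Complex.C) : x <> 0 -> Cconj x <> 0.
Proof. intros H E. apply H. rewrite <- (Cconj_conj x), E. apply injective_projections; simpl; ring. Qed.

Lemma FIN (l Wm X' g' X g : Complex.C) : l <> 0 -> Wm <> 0 -> g <> 0 -> g' <> 0 ->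
  l * X' * g = - X * g' * Cconj l ->
  l * Wm / Cconj (l * Wm) * (X' / (2 * g')) = - (Wm / Cconj Wm * (X / (2 * g))).
Proof.
  intros H1 H2 H3 H4 K. rewrite Cmult_conj.
  assert (C1 := conj_nz _ H1). assert (C2 := conj_nz _ H2).
  transitivity (Wm / Cconj Wm * ((l * X' * g) / (Cconj l * 2 * g * g'))).
  { field. repeat split; auto. }
  rewrite K. field. repeat split; auto.
Qed.

Theorem theorem20 (Om : Complex.C -> Prop) (Phi : Complex.C -> Complex.C)
  (U V : R -> R) :
  is_domain Om ->
  analytic_on Phi Om ->
  (exists M : R, forall z, Om z -> Cmod (dz Phi z) <= M) ->
  (forall z, Om z -> dz Phi z <> 0) ->
  (forall t, ex_derive U t) -> (forall t, ex_derive V t) ->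
  (forall t, U t <> 0%R) -> (forall t, V t <> 0%R) ->
  let u := fun z => Re (Phi z) in
  let v := fun z => Im (Phi z) in
  let F := fun z => RtoC (U (u z) * V (v z)) in
  let G := fun z => Ci / RtoC (U (u z) * V (v z)) in
  let Fs := fun (m : Z) z =>
    if Z.even m then Czpow (dz Phi z) m * F z
    else Czpow (dz Phi z) m / RtoC (U (u z) ^ 2) * F z in
  let Gs := fun (m : Z) z =>
    if Z.even m then Czpow (dz Phi z) m * G z
    else Czpow (dz Phi z) m * RtoC (U (u z) ^ 2) * G z in
  generating_sequence Fs Gs Om /\ Fs 0%Z = F /\ Gs 0%Z = G.
Proof.
  intros HD HA _ HNZ HdU HdV HU0 HV0 u v F G Fs Gs.
  destruct HD as [HO _].
  assert (HPhi : forall z, Om z -> CD Phi z (dz Phi z)).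
  { intros z Hz. destruct (HA z Hz) as [l Hl]. apply CNM_CDe, CDe_CD in Hl.
    assert (E : dz Phi z = l).
    { pose proof (PD_of_CD _ _ _ Hl) as P. unfold dz.
      change (dx Phi z) with (dxR Phi z). change (dy Phi z) with (dyR Phi z).
      rewrite (PD_dx _ _ _ _ P), (PD_dy _ _ _ _ P).
      replace (l - Ci * (Ci * l)) with (l - (Ci * Ci) * l) by ring. rewrite Ci2. field. }
    rewrite E; auto. }
  assert (HW' := REG Phi (dz Phi) Om HO HPhi).
  set (W := fun m z => Czpow (dz Phi z) m).
  assert (HWk : forall m z, Om z -> exists k, CD (W m) z k).
  { intros m z Hz. destruct (HW' z Hz) as [k Hk]. exact (CD_Czpow (dz Phi) z k m Hk (HNZ z Hz)). }
  assert (HWnz : forall m z, Om z -> W m z <> 0) by (intros; apply Czpow_nz; auto).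
  set (gE := fun q => (U (u q) * V (v q))%R). set (gO := fun q => (V (v q) * / U (u q))%R).
  set (gEx := fun q => (Re (dz Phi q) * Derive U (u q) * V (v q) + U (u q) * (Im (dz Phi q) * Derive V (v q)))%R).
  set (gEy := fun q => (Re (Ci * dz Phi q) * Derive U (u q) * V (v q) + U (u q) * (Im (Ci * dz Phi q) * Derive V (v q)))%R).
  set (gOx := fun q => (Im (dz Phi q) * Derive V (v q) * / U (u q) + V (v q) * (- (Re (dz Phi q) * Derive U (u q)) / U (u q) ^ 2))%R).
  set (gOy := fun q => (Im (Ci * dz Phi q) * Derive V (v q) * / U (u q) + V (v q) * (- (Re (Ci * dz Phi q) * Derive U (u q)) / U (u q) ^ 2))%R).
  assert (LD : forall x y, Om (x, y) ->
     is_derive (fun t => Re (Phi (t, y))) x (Re (dz Phi (x, y))) /\ is_derive (fun t => Im (Phi (t, y))) x (Im (dz Phi (x, y))) /\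
     is_derive (fun t => Re (Phi (x, t))) y (Re (Ci * dz Phi (x, y))) /\ is_derive (fun t => Im (Phi (x, t))) y (Im (Ci * dz Phi (x, y)))).
  { intros x y H. exact (PD_of_CD _ _ _ (HPhi _ H)). }
  assert (DgE : forall x y, Om (x, y) -> is_derive (fun t => gE (t, y)) x (gEx (x, y)) /\ is_derive (fun t => gE (x, t)) y (gEy (x, y))).
  { intros x y H. destruct (LD x y H) as (L1 & L2 & L3 & L4). split.
    - eapply rd_eq; [|exact (rd_mult _ _ _ _ _ (rd_comp U _ _ _ _ L1 (Derive_correct _ _ (HdU _))) (rd_comp V _ _ _ _ L2 (Derive_correct _ _ (HdV _))))].
      unfold gEx, u, v. reflexivity.
    - eapply rd_eq; [|exact (rd_mult _ _ _ _ _ (rd_comp U _ _ _ _ L3 (Derive_correct _ _ (HdU _))) (rd_comp V _ _ _ _ L4 (Derive_correct _ _ (HdV _))))].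
      unfold gEy, u, v. reflexivity. }
  assert (DgO : forall x y, Om (x, y) -> is_derive (fun t => gO (t, y)) x (gOx (x, y)) /\ is_derive (fun t => gO (x, t)) y (gOy (x, y))).
  { intros x y H. destruct (LD x y H) as (L1 & L2 & L3 & L4). split.
    - eapply rd_eq; [|exact (rd_mult _ _ _ _ _ (rd_comp V _ _ _ _ L2 (Derive_correct _ _ (HdV _)))
          (is_derive_inv _ _ _ (rd_comp U _ _ _ _ L1 (Derive_correct _ _ (HdU _))) (HU0 _)))].
      unfold gOx, u, v. reflexivity.
    - eapply rd_eq; [|exact (rd_mult _ _ _ _ _ (rd_comp V _ _ _ _ L4 (Derive_correct _ _ (HdV _)))
          (is_derive_inv _ _ _ (rd_comp U _ _ _ _ L3 (Derive_correct _ _ (HdU _))) (HU0 _)))].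
      unfold gOy, u, v. reflexivity. }
  assert (GEnz : forall q, gE q <> 0%R) by (intros; unfold gE; apply Rmult_integral_contrapositive; auto).
  assert (GOnz : forall q, gO q <> 0%R) by (intros; unfold gO; apply Rmult_integral_contrapositive; split; auto; apply Rinv_neq_0_compat; auto).
  assert (CHe : forall m z, Z.even m = true -> Om z ->
    HP (Fs m) z /\ HP (Gs m) z /\ char_a (Fs m) (Gs m) z = 0 /\
    char_b (Fs m) (Gs m) z = W m z / Cconj (W m z) * ((RtoC (gEx z) + Ci * RtoC (gEy z)) / (2 * RtoC (gE z))) /\
    char_B (Fs m) (Gs m) z = W m z / Cconj (W m z) * ((RtoC (gEx z) - Ci * RtoC (gEy z)) / (2 * RtoC (gE z))) /\
    (0 < Im (Cconj (Fs m z) * Gs m z))%R).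
  { intros m [x y] Hm Hz. destruct (HWk m _ Hz) as [k Hk]. destruct (DgE x y Hz) as [D1 D2].
    apply (CHAR (Fs m) (Gs m) (W m) gE (x, y) k); auto.
    - intros q. unfold Fs. rewrite Hm. reflexivity.
    - intros q. unfold Gs. rewrite Hm. unfold G, W, gE. apply EGeven; auto. }
  assert (CHo : forall m z, Z.even m = false -> Om z ->
    HP (Fs m) z /\ HP (Gs m) z /\ char_a (Fs m) (Gs m) z = 0 /\
    char_b (Fs m) (Gs m) z = W m z / Cconj (W m z) * ((RtoC (gOx z) + Ci * RtoC (gOy z)) / (2 * RtoC (gO z))) /\
    char_B (Fs m) (Gs m) z = W m z / Cconj (W m z) * ((RtoC (gOx z) - Ci * RtoC (gOy z)) / (2 * RtoC (gO z))) /\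
    (0 < Im (Cconj (Fs m z) * Gs m z))%R).
  { intros m [x y] Hm Hz. destruct (HWk m _ Hz) as [k Hk]. destruct (DgO x y Hz) as [D1 D2].
    apply (CHAR (Fs m) (Gs m) (W m) gO (x, y) k); auto.
    - intros q. unfold Fs. rewrite Hm. unfold F, W, gO. apply EFodd; auto.
    - intros q. unfold Gs. rewrite Hm. unfold G, W, gO. apply EGodd; auto. }
  assert (GP : forall m, generating_pair (Fs m) (Gs m) Om).
  { intros m. destruct (Z.even m) eqn:Hm.
    - split; [|split]; intros z Hz; destruct (CHe m z Hm Hz) as (A1 & A2 & _ & _ & _ & A6); auto.
    - split; [|split]; intros z Hz; destruct (CHo m z Hm Hz) as (A1 & A2 & _ & _ & _ & A6); auto. }
  split; [split|split].
  - exact GP.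
  - intros m. split; [apply GP|]. intros z Hz.
    assert (Hs : Z.even (m + 1) = negb (Z.even m)).
    { change (m + 1)%Z with (Z.succ m). rewrite Z.even_succ, <- Z.negb_even. reflexivity. }
    assert (WS : W (m + 1)%Z z = dz Phi z * W m z) by (unfold W; apply Czpow_succ; auto).
    assert (Ul : U (u z) <> 0%R) by auto.
    assert (El : dz Phi z = (Re (dz Phi z), Im (dz Phi z))) by (destruct (dz Phi z); reflexivity).
    destruct (Z.even m) eqn:Hm; simpl in Hs.
    + destruct (CHe m z Hm Hz) as (_ & _ & A3 & _ & A5 & _).
      destruct (CHo (m + 1)%Z z Hs Hz) as (_ & _ & B3 & B4 & _ & _).
      split; [rewrite A3, B3; reflexivity|]. rewrite A5, B4, WS.
      apply FIN; auto; try (apply RtoC_nz; auto).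
      apply (KEY_even_l _ (Derive U (u z)) (Derive V (v z)) (U (u z)) (V (v z))); auto;
        unfold gEx, gEy, gOx, gOy; rewrite ?Re_Ci_mult, ?Im_Ci_mult; ring.
    + destruct (CHo m z Hm Hz) as (_ & _ & A3 & _ & A5 & _).
      destruct (CHe (m + 1)%Z z Hs Hz) as (_ & _ & B3 & B4 & _ & _).
      split; [rewrite A3, B3; reflexivity|]. rewrite A5, B4, WS.
      apply FIN; auto; try (apply RtoC_nz; auto).
      apply (KEY_odd_l _ (Derive U (u z)) (Derive V (v z)) (U (u z)) (V (v z))); auto;
        unfold gEx, gEy, gOx, gOy; rewrite ?Re_Ci_mult, ?Im_Ci_mult; ring.
  - apply functional_extensionality. intros q. unfold Fs. simpl. ring.
  - apply functional_extensionality. intros q. unfold Gs. simpl. ring.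
Qed.
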